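(* For every positive integer $k$: (i) $\mathrm{Cl}_k(\pi/3)$ lies in the $\mathbb{Q}$-linear span of $S^{o}_{k,1}$; (ii) $\mathrm{Gl}_k(\pi/3)$ lies in the $\mathbb{Q}$-linear span of $S^{e}_{k,1}$ (which equals $S^e_{k,0}=\{\pi^k\}$).
   Context: $\mathrm{Li}_k(z)=\sum_{m\ge1}z^m/m^k$ (for $k=1$, $\mathrm{Li}_1(z)=-\log(1-z)$). $\mathrm{Cl}_k(\sigma)=\mathrm{Im}\,\mathrm{Li}_k(e^{i\sigma})$ if $k$ is even and $\mathrm{Re}\,\mathrm{Li}_k(e^{i\sigma})$ if $k$ is odd; $\mathrm{Gl}_k(\sigma)=\mathrm{Re}\,\mathrm{Li}_k(e^{i\sigma})$ if $k$ even and $\mathrm{Im}\,\mathrm{Li}_k(e^{i\sigma})$ if $k$ odd. $A(\theta)=\log|2\sin(\theta/2)|$; for $k_u\ge2$, $\mathrm{SLs}(k_1,\dots,k_n)=\int_0^{\pi/3}\int_0^{\theta_n}\cdots\int_0^{\theta_2}\prod_{u=1}^n(\theta_u-\pi/3)^{k_u-2}A(\theta_u)\,d\theta_1\cdots d\theta_n$, $\mathrm{SLs}(\emptyset)=1$. For $k,d\ge0$: $S^o_{k,d}=\{\pi^m\mathrm{SLs}(k_1,\dots,k_n): m+k_1+\dots+k_n=k,\ 0\le n\le d,\ n\text{ odd},\ m\ge0,\ k_i\ge2\}$ and $S^e_{k,d}$ is defined the same way with $n$ even. *)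

(* Defs.v *)
From Stdlib Require Import Reals QArith Qreals.
From Coquelicot Require Import Coquelicot.
Open Scope R_scope.

(* Real and imaginary parts of Li_k(e^{i sigma}) = sum_{m>=1} e^{i m sigma}/m^k,
   as limits of the partial sums (Coquelicot [Series]; index shifted so m = j+1). *)
Definition ReLi (k : nat) (sigma : R) : R :=
  Series (fun j : nat => cos (INR (S j) * sigma) / (INR (S j)) ^ k).
Definition ImLi (k : nat) (sigma : R) : R :=
  Series (fun j : nat => sin (INR (S j) * sigma) / (INR (S j)) ^ k).

Definition Cl (k : nat) (sigma : R) : R :=
  if Nat.even k then ImLi k sigma else ReLi k sigma.
Definition Gl (k : nat) (sigma : R) : R :=
  if Nat.even k then ReLi k sigma else ImLi k sigma.

Definition Afun (theta : R) : R := ln (Rabs (2 * sin (theta / 2))).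

Definition SLs1 (k1 : nat) : R :=
  RInt_gen (fun theta => (theta - PI / 3) ^ (k1 - 2) * Afun theta)
           (at_right 0) (at_point (PI / 3)).

(* Main.v *)
Require Import Defs.
From Stdlib Require Import Reals QArith Qreals Lia Lra.
From Coquelicot Require Import Coquelicot.
Open Scope R_scope.


Definition aa : R := PI / 3.
Lemma aa_pos : 0 < aa.
Proof. unfold aa. generalize PI_RGT_0. lra. Qed.
Lemma aa_lt1 : aa < 2.
Proof. unfold aa. generalize PI_4. lra. Qed.
Lemma aa_lt_PI : aa < PI.
Proof. unfold aa. generalize PI_RGT_0. lra. Qed.

Definition isQ (x : R) : Prop := exists q : Q, x = Q2R q.

Lemma isQ_Q2R q : isQ (Q2R q). Proof. exists q; auto. Qed.
Lemma isQ_0 : isQ 0. Proof. exists 0%Q. rewrite RMicromega.Q2R_0; auto. Qed.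
Lemma isQ_1 : isQ 1. Proof. exists 1%Q. rewrite RMicromega.Q2R_1; auto. Qed.
Lemma isQ_plus x y : isQ x -> isQ y -> isQ (x + y).
Proof. intros [p ->] [q ->]. exists (p+q)%Q. rewrite Q2R_plus; auto. Qed.
Lemma isQ_mult x y : isQ x -> isQ y -> isQ (x * y).
Proof. intros [p ->] [q ->]. exists (p*q)%Q. rewrite Q2R_mult; auto. Qed.
Lemma isQ_opp x : isQ x -> isQ (- x).
Proof. intros [p ->]. exists (-p)%Q. rewrite Q2R_opp; auto. Qed.
Lemma isQ_minus x y : isQ x -> isQ y -> isQ (x - y).
Proof. intros. unfold Rminus. apply isQ_plus; auto. apply isQ_opp; auto. Qed.
Lemma isQ_inv x : isQ x -> isQ (/ x).
Proof.
  intros [p ->]. destruct (Qeq_dec p 0) as [H|H].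
  - rewrite (Qeq_eqR _ _ H), RMicromega.Q2R_0, Rinv_0. apply isQ_0.
  - exists (/p)%Q. rewrite Q2R_inv; auto.
Qed.
Lemma isQ_div x y : isQ x -> isQ y -> isQ (x / y).
Proof. intros. unfold Rdiv. apply isQ_mult; auto. apply isQ_inv; auto. Qed.
Lemma isQ_INR n : isQ (INR n).
Proof. induction n. simpl. apply isQ_0. rewrite S_INR. apply isQ_plus; auto. apply isQ_1. Qed.
Lemma isQ_pow x n : isQ x -> isQ (x ^ n).
Proof. intros H. induction n; simpl. apply isQ_1. apply isQ_mult; auto. Qed.

Definition SpanRe (k : nat) (x : R) : Prop :=
  exists c : nat -> Q, x = sum_n_m (fun k1 : nat => Q2R (c k1) * PI ^ (k - k1) * SLs1 k1) 2 k.
Definition SpanIm (k : nat) (x : R) : Prop := exists r, isQ r /\ x = r * PI ^ k.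

Lemma sum_n_m_plusR (f g : nat -> R) n m :
  sum_n_m (fun i => f i + g i) n m = sum_n_m f n m + sum_n_m g n m.
Proof. apply (sum_n_m_plus f g n m). Qed.
Lemma sum_n_m_multR (r : R) (f : nat -> R) n m :
  sum_n_m (fun i => r * f i) n m = r * sum_n_m f n m.
Proof. apply (sum_n_m_mult_l r f n m). Qed.

Lemma sum_zeroR n m : sum_n_m (fun _ => 0) n m = 0.
Proof. apply (sum_n_m_const_zero (G := R_AbelianMonoid)). Qed.

Lemma SpanRe_0 k : SpanRe k 0.
Proof.
  exists (fun _ => 0%Q). transitivity (sum_n_m (fun _ => 0) 2 k).
  symmetry; apply sum_zeroR. apply sum_n_m_ext. intros. rewrite RMicromega.Q2R_0. simpl. ring.
Qed.

Lemma SpanRe_plus k x y : SpanRe k x -> SpanRe k y -> SpanRe k (x + y).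
Proof.
  intros [c ->] [d ->]. exists (fun i => (c i + d i)%Q).
  rewrite <- sum_n_m_plusR. apply sum_n_m_ext. intros. simpl. rewrite Q2R_plus. ring.
Qed.

Lemma SpanRe_scal k r x : isQ r -> SpanRe k x -> SpanRe k (r * x).
Proof.
  intros [q ->] [c ->]. exists (fun i => (q * c i)%Q).
  rewrite <- sum_n_m_multR. apply sum_n_m_ext. intros. simpl. rewrite Q2R_mult. ring.
Qed.

Lemma SpanRe_opp k x : SpanRe k x -> SpanRe k (- x).
Proof. intros. replace (-x) with ((-1) * x) by ring. apply SpanRe_scal; auto.
  apply isQ_opp, isQ_1. Qed.
Lemma SpanRe_minus k x y : SpanRe k x -> SpanRe k y -> SpanRe k (x - y).
Proof. intros. apply SpanRe_plus; auto. apply SpanRe_opp; auto. Qed.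

Lemma SpanRe_unscal k r x : isQ r -> r <> 0 -> SpanRe k (r * x) -> SpanRe k x.
Proof.
  intros Hr Hr0 H. replace x with (/ r * (r * x)) by (field; auto).
  apply SpanRe_scal; auto. apply isQ_inv; auto.
Qed.

Lemma SpanRe_SLs1 k : (2 <= k)%nat -> SpanRe k (SLs1 k).
Proof.
  intros Hk. exists (fun i => if Nat.eqb i k then 1%Q else 0%Q).
  destruct k as [|[|k]]; try lia.
  rewrite sum_n_m_Chasles with (m := S k); try lia.
  rewrite sum_n_n.
  rewrite Nat.eqb_refl, RMicromega.Q2R_1, Nat.sub_diag.
  rewrite (sum_n_m_ext_loc _ (fun _ => 0)).
  - rewrite sum_zeroR. unfold plus; simpl. ring.
  - intros i Hi. replace (Nat.eqb i (S (S k))) with false. rewrite RMicromega.Q2R_0. simpl. ring.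
    symmetry. apply Nat.eqb_neq. lia.
Qed.

Lemma SpanRe_mulPI k i x : SpanRe k x -> SpanRe (k + i) (PI ^ i * x).
Proof.
  intros [c ->]. destruct (Compare_dec.le_lt_dec k 1) as [Hk|Hk].
  - rewrite sum_n_m_zero; try lia. unfold zero; simpl. rewrite Rmult_0_r. apply SpanRe_0.
  - exists (fun j => if Nat.leb j k then c j else 0%Q).
    rewrite (sum_n_m_Chasles _ 2 k (k+i)); try lia.
    rewrite (sum_n_m_ext_loc _ (fun _ => 0) (S k)).
    2:{ intros j Hj. replace (Nat.leb j k) with false. rewrite RMicromega.Q2R_0. simpl. ring.
        symmetry. apply Nat.leb_gt. lia. }
    rewrite sum_zeroR. unfold plus; simpl. rewrite Rplus_0_r.
    rewrite <- sum_n_m_multR. apply sum_n_m_ext_loc. intros j Hj.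
    replace (Nat.leb j k) with true by (symmetry; apply Nat.leb_le; lia).
    replace (k + i - j)%nat with (i + (k - j))%nat by lia. rewrite pow_add. simpl. ring.
Qed.

Lemma SpanRe_mulPI' k i e x : (e + i = k)%nat -> SpanRe e x -> SpanRe k (PI ^ i * x).
Proof. intros <-. apply SpanRe_mulPI. Qed.

Lemma SpanIm_plus k x y : SpanIm k x -> SpanIm k y -> SpanIm k (x + y).
Proof. intros [r [Hr ->]] [s [Hs ->]]. exists (r + s). split. apply isQ_plus; auto. ring. Qed.
Lemma SpanIm_scal k r x : isQ r -> SpanIm k x -> SpanIm k (r * x).
Proof. intros Hr [s [Hs ->]]. exists (r * s). split. apply isQ_mult; auto. ring. Qed.
Lemma SpanIm_0 k : SpanIm k 0.
Proof. exists 0. split. apply isQ_0. ring. Qed.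
Lemma SpanIm_minus k x y : SpanIm k x -> SpanIm k y -> SpanIm k (x - y).
Proof. intros. replace (x - y) with (x + (-1) * y) by ring. apply SpanIm_plus; auto.
  apply SpanIm_scal; auto. apply isQ_opp, isQ_1. Qed.
Lemma SpanIm_unscal k r x : isQ r -> r <> 0 -> SpanIm k (r * x) -> SpanIm k x.
Proof.
  intros Hr Hr0 H. replace x with (/ r * (r * x)) by (field; auto).
  apply SpanIm_scal; auto. apply isQ_inv; auto.
Qed.
Lemma SpanIm_mulPI k i e x : (e + i = k)%nat -> SpanIm e x -> SpanIm k (PI ^ i * x).
Proof. intros <- [s [Hs ->]]. exists s. split; auto. rewrite pow_add. ring. Qed.

Definition cls (re : bool) (k : nat) (x : R) : Prop := if re then SpanRe k x else SpanIm k x.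
Lemma cls_plus b k x y : cls b k x -> cls b k y -> cls b k (x + y).
Proof. destruct b; simpl. apply SpanRe_plus. apply SpanIm_plus. Qed.
Lemma cls_scal b k r x : isQ r -> cls b k x -> cls b k (r * x).
Proof. destruct b; simpl. apply SpanRe_scal. apply SpanIm_scal. Qed.
Lemma cls_0 b k : cls b k 0.
Proof. destruct b; simpl. apply SpanRe_0. apply SpanIm_0. Qed.
Lemma cls_minus b k x y : cls b k x -> cls b k y -> cls b k (x - y).
Proof. destruct b; simpl. apply SpanRe_minus. apply SpanIm_minus. Qed.
Lemma cls_unscal b k r x : isQ r -> r <> 0 -> cls b k (r * x) -> cls b k x.
Proof. destruct b; simpl. apply SpanRe_unscal. apply SpanIm_unscal. Qed.
Lemma cls_mulPI b k i e x : (e + i = k)%nat -> cls b e x -> cls b k (PI ^ i * x).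
Proof. destruct b; simpl. apply SpanRe_mulPI'. apply SpanIm_mulPI. Qed.
Lemma cls_mul_aa b k i e x : (e + i = k)%nat -> cls b e x -> cls b k ((- aa) ^ i * x).
Proof.
  intros He H. replace ((- aa) ^ i * x) with ((- / 3) ^ i * (PI ^ i * x)).
  - apply cls_scal. apply isQ_pow, isQ_opp, isQ_inv. replace 3 with (INR 3) by (simpl; ring). apply isQ_INR. eapply cls_mulPI; eauto.
  - unfold aa. rewrite <- Rmult_assoc, <- Rpow_mult_distr. f_equal. f_equal. field.
Qed.


Lemma is_seriesR_plus a b la lb : is_series a la -> is_series b lb ->
  is_series (fun n => a n + b n) (la + lb).
Proof. intros. apply (is_series_plus a b la lb); auto. Qed.
Lemma is_seriesR_scal c a la : is_series a la -> is_series (fun n => c * a n) (c * la).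
Proof. intros. apply (is_series_scal c a la); auto. Qed.
Lemma is_seriesR_minus a b la lb : is_series a la -> is_series b lb ->
  is_series (fun n => a n - b n) (la - lb).
Proof. intros. apply (is_series_minus a b la lb); auto. Qed.

Lemma is_seriesR_ext (a b : nat -> R) l : (forall n, a n = b n) -> is_series a l -> is_series b l.
Proof. intros. apply (is_series_ext a b l); auto. Qed.

Lemma INRS_pos j : 0 < INR (S j).
Proof. apply lt_0_INR; lia. Qed.

Lemma sum_n_tele j : sum_n (fun j => / INR (S j) - / INR (S (S j))) j = 1 - / INR (S (S j)).
Proof.
  induction j.
  - rewrite sum_O. simpl. field.
  - rewrite sum_Sn, IHj. unfold plus; simpl. ring.
Qed.

Lemma is_series_of_lim a l : is_lim_seq (sum_n a) (Finite l) -> is_series a l.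
Proof. intros H. exact H. Qed.
Lemma lim_of_is_series a l : is_series a l -> is_lim_seq (sum_n a) (Finite l).
Proof. intros H. exact H. Qed.

Lemma lim_invS : is_lim_seq (fun j => / INR (S j)) 0.
Proof.
  apply (is_lim_seq_incr_1 (fun j => / INR j) 0).
  replace (Finite 0) with (Rbar_inv p_infty) by auto.
  apply is_lim_seq_inv. apply is_lim_seq_INR. discriminate.
Qed.

Lemma is_series_tele : is_series (fun j => / INR (S j) - / INR (S (S j))) 1.
Proof.
  apply is_series_of_lim. apply (is_lim_seq_ext (fun j => 1 - / INR (S (S j)))).
  intros; rewrite sum_n_tele; auto.
  replace (Finite 1) with (Rbar_minus 1 0) by (simpl; f_equal; ring).
  apply is_lim_seq_minus'. apply is_lim_seq_const.
  apply (is_lim_seq_incr_1 (fun j => / INR (S j)) 0). apply lim_invS.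
Qed.

Lemma ex_series_leR (a b : nat -> R) : (forall n, Rabs (a n) <= b n) -> ex_series b -> ex_series a.
Proof. intros. apply (ex_series_le (K := R_AbsRing) (V := R_CompleteNormedModule) a b); auto. Qed.

Lemma ex_series_inv2 : ex_series (fun j => / INR (S j) ^ 2).
Proof.
  apply (ex_series_leR _ (fun j => 2 * (/ INR (S j) - / INR (S (S j))))).
  - intros j. rewrite !S_INR. pose proof (pos_INR j) as Hj. set (x := INR j) in *.
    rewrite Rabs_pos_eq. 2:{ apply Rlt_le, Rinv_0_lt_compat, pow_lt; lra. }
    assert (E : 2 * (/ (x + 1) - / (x + 1 + 1)) - / (x + 1) ^ 2 = x / ((x+1)^2 * (x+2))).
    { field. lra. }
    assert (0 <= x / ((x+1)^2 * (x+2))).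
    { apply Rdiv_le_0_compat; auto. apply Rmult_lt_0_compat. apply pow_lt; lra. lra. }
    lra.
  - exists (2 * 1). apply is_seriesR_scal. apply is_series_tele.
Qed.

Lemma ex_series_bound (u : nat -> R) K :
  (forall j, Rabs (u j) <= K / INR (S j) ^ 2) -> ex_series u.
Proof.
  intros H. apply (ex_series_leR _ (fun j => K * / INR (S j) ^ 2)).
  - intros j. apply H.
  - destruct ex_series_inv2 as [l Hl]. exists (K * l). apply is_seriesR_scal; auto.
Qed.

Lemma invpow_le2 j e : (2 <= e)%nat -> / INR (S j) ^ e <= 1 / INR (S j) ^ 2.
Proof.
  intros He. pose proof (INRS_pos j). assert (1 <= INR (S j)) by (apply (le_INR 1); lia).
  unfold Rdiv. rewrite Rmult_1_l. apply Rinv_le_contravar. apply pow_lt; lra.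
  apply Rle_pow; auto.
Qed.

Lemma ex_series_invpow e : (2 <= e)%nat -> ex_series (fun j => / INR (S j) ^ e).
Proof.
  intros He. apply (ex_series_bound _ 1). intros j.
  rewrite Rabs_pos_eq. apply invpow_le2; auto.
  apply Rlt_le, Rinv_0_lt_compat, pow_lt, INRS_pos.
Qed.

Definition Zs (e : nat) : R := Series (fun j => / INR (S j) ^ e).

Definition cval (m : nat) : R := (-1) ^ m * (if Nat.eqb (m mod 3) 0 then 1 else - / 2).

Lemma cos_2PI3 : cos (2 * (PI / 3)) = - / 2.
Proof. rewrite cos_2a_cos, cos_PI3. field. Qed.

Lemma cos_maa_aux q r : (r < 3)%nat ->
  cos (INR (3 * q + r) * aa) = (-1) ^ (3 * q + r) * (if Nat.eqb r 0 then 1 else - / 2).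
Proof.
  intros Hr. induction q.
  - simpl (3 * 0)%nat. simpl plus.
    destruct r as [|[|[|r]]]; try lia; unfold aa; simpl.
    + rewrite Rmult_0_l, cos_0. ring.
    + rewrite Rmult_1_l, cos_PI3. field.
    + replace ((1 + 1) * (PI / 3)) with (2 * (PI / 3)) by ring. rewrite cos_2PI3. field.
  - replace (INR (3 * S q + r) * aa) with (INR (3 * q + r) * aa + PI).
    2:{ rewrite !plus_INR, !mult_INR, (S_INR q). unfold aa. simpl. field. }
    rewrite neg_cos, IHq. replace (3 * S q + r)%nat with (3 + (3 * q + r))%nat by lia.
    rewrite !pow_add. ring.
Qed.

Lemma cos_maa m : cos (INR m * aa) = cval m.
Proof.
  unfold cval. rewrite (Nat.div_mod_eq m 3) at 1 2.
  rewrite cos_maa_aux. 2: apply Nat.mod_upper_bound; lia. reflexivity.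
Qed.

Lemma divS_cases n d : (0 < d)%nat ->
  ((S n) mod d = 0 /\ (S n) / d = S (n / d))%nat \/ ((S n) mod d <> 0 /\ (S n) / d = n / d)%nat.
Proof.
  intros Hd. pose proof (Nat.div_mod_eq n d) as E. pose proof (Nat.mod_upper_bound n d ltac:(lia)) as Hr.
  set (q := (n / d)%nat) in *. set (r := (n mod d)%nat) in *.
  destruct (Nat.eq_dec (S r) d) as [Heq|Hne].
  - left. split.
    + symmetry. apply (Nat.mod_unique _ _ (S q)); lia.
    + symmetry. apply (Nat.div_unique _ _ _ 0); lia.
  - right. assert (S r < d)%nat by lia. split.
    + assert (S r = S n mod d) by (apply (Nat.mod_unique _ _ q); lia). lia.
    + symmetry. apply (Nat.div_unique _ _ _ (S r)); lia.
Qed.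

Definition Tsum (b : nat -> R) (q : nat) : R := match q with O => 0 | S q' => sum_n b q' end.

Lemma sparse_series (d : nat) (u b : nat -> R) (l : R) : (0 < d)%nat ->
  (forall j, ((S j) mod d <> 0)%nat -> u j = 0) ->
  (forall i, u (d * S i - 1)%nat = b i) -> is_series b l -> is_series u l.
Proof.
  intros Hd Hz Hb Hl.
  assert (HT : forall N, sum_n u N = Tsum b ((S N) / d)).
  { induction N.
    - rewrite sum_O. destruct (divS_cases 0 d Hd) as [[H1 H2]|[H1 H2]].
      + rewrite H2, Nat.div_0_l by lia. simpl. rewrite sum_O.
        assert (d = 1)%nat. { destruct d as [|[|d]]; try lia. rewrite Nat.mod_small in H1; lia. }
        subst d. rewrite <- Hb. reflexivity.
      + rewrite H2, Nat.div_0_l by lia. simpl. apply Hz. auto.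
    - rewrite sum_Sn, IHN. unfold plus; simpl.
      destruct (divS_cases (S N) d Hd) as [[H1 H2]|[H1 H2]].
      + rewrite H2. destruct ((S N) / d)%nat eqn:Eq.
        * simpl. rewrite sum_O. rewrite <- Hb, Rplus_0_l. f_equal.
          pose proof (Nat.div_mod_eq (S (S N)) d). rewrite H1, H2 in H; try rewrite Eq in H. lia.
        * simpl. rewrite sum_Sn. unfold plus; simpl. f_equal. rewrite <- Hb. f_equal.
          pose proof (Nat.div_mod_eq (S (S N)) d). rewrite H1, H2 in H; try rewrite Eq in H; lia.
      + rewrite H2, (Hz (S N) H1). ring. }
  apply is_series_of_lim. apply (is_lim_seq_ext_loc (fun N => sum_n b ((S N) / d - 1)%nat)).
  - exists d. intros N HN. rewrite HT. destruct ((S N)/d)%nat eqn:Eq.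
    + exfalso. assert (1 <= S N / d)%nat. { apply Nat.div_le_lower_bound; lia. } lia.
    + simpl. f_equal. lia.
  - apply (is_lim_seq_subseq (sum_n b) l (fun N => (S N / d - 1)%nat)).
    + intros P [N0 HN0]. exists (d * S N0)%nat. intros n Hn. apply HN0.
      assert (S N0 <= S n / d)%nat. { apply Nat.div_le_lower_bound; lia. } lia.
    + apply lim_of_is_series; auto.
Qed.

Lemma pow_m1_mod m : (-1) ^ m = (-1) ^ (m mod 2).
Proof.
  rewrite (Nat.div_mod_eq m 2) at 1. rewrite pow_add, pow_mult.
  replace ((-1)^2) with 1 by ring. rewrite pow1. ring.
Qed.

Lemma pow_m1_3 i : (-1) ^ (3 * i) = (-1) ^ i.
Proof. rewrite pow_mult. f_equal. ring. Qed.

Lemma lim_invpowS k : is_lim_seq (fun n => / INR (S n) ^ (S k)) 0.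
Proof.
  induction k.
  - apply (is_lim_seq_ext (fun n => / INR (S n))). intros; simpl; rewrite Rmult_1_r; auto.
    apply lim_invS.
  - apply (is_lim_seq_ext (fun n => / INR (S n) * / INR (S n) ^ (S k))).
    { intros n. simpl (_ ^ (S (S k))). rewrite Rinv_mult. auto. }
    replace (Finite 0) with (Rbar_mult 0 0) by (simpl; f_equal; ring).
    apply is_lim_seq_mult'. apply lim_invS. auto.
Qed.

Definition eta (k : nat) : R := Series (fun j => (-1) ^ (S j) / INR (S j) ^ k).

Lemma ex_eta k : (1 <= k)%nat -> ex_series (fun j => (-1) ^ (S j) / INR (S j) ^ k).
Proof.
  intros Hk. destruct (alternated_series (fun j => / INR (S j) ^ k)) as [l Hl].
  - intros n. apply Rinv_le_contravar. apply pow_lt, INRS_pos.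
    apply pow_incr. split. apply Rlt_le, INRS_pos. apply le_INR; lia.
  - apply is_lim_seq_Reals. destruct k. lia. apply lim_invpowS.
  - assert (H : is_series (tg_alt (fun j => / INR (S j) ^ k)) l).
    { apply is_series_of_lim. apply (is_lim_seq_ext (fun N => sum_f_R0 (tg_alt (fun j => / INR (S j) ^ k)) N)).
      intros N. rewrite sum_n_Reals. auto. apply is_lim_seq_Reals; auto. }
    exists (-l). apply (is_series_ext (fun n => opp (tg_alt (fun j => / INR (S j) ^ k) n))).
    + intros n. unfold tg_alt, opp; simpl. unfold Rdiv. ring.
    + apply (is_series_opp _ l H).
Qed.

Lemma ReLi_decomp k : (1 <= k)%nat ->
  is_series (fun j => cos (INR (S j) * aa) / INR (S j) ^ k) (- / 2 * eta k + 3 / 2 * (/ 3 ^ k * eta k)).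
Proof.
  intros Hk.
  set (v := fun j => if Nat.eqb ((S j) mod 3) 0 then (-1) ^ (S j) / INR (S j) ^ k else 0).
  apply (is_seriesR_ext (fun j => - / 2 * ((-1) ^ (S j) / INR (S j) ^ k) + 3 / 2 * v j)).
  - intros j. rewrite cos_maa. unfold cval, v. destruct (Nat.eqb (S j mod 3) 0); field;
    apply pow_nonzero; apply Rgt_not_eq, INRS_pos.
  - apply is_seriesR_plus. apply is_seriesR_scal. apply Series_correct, ex_eta; auto.
    apply is_seriesR_scal. apply (sparse_series 3 v (fun i => / 3 ^ k * ((-1) ^ (S i) / INR (S i) ^ k))).
    + lia.
    + intros j Hj. unfold v. apply Nat.eqb_neq in Hj. rewrite Hj. auto.
    + intros i. unfold v. replace (S (3 * S i - 1)) with (3 * S i)%nat by lia.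
      rewrite Nat.mul_comm, Nat.Div0.mod_mul. simpl Nat.eqb. cbv iota.
      rewrite Nat.mul_comm, pow_m1_3, mult_INR. replace (INR 3) with 3 by (simpl; ring). rewrite Rpow_mult_distr.
      field. split. apply pow_nonzero; apply Rgt_not_eq, INRS_pos. apply pow_nonzero. lra.
    + apply is_seriesR_scal. apply Series_correct, ex_eta; auto.
Qed.

Lemma eta_zeta k : (2 <= k)%nat -> eta k = (2 / 2 ^ k - 1) * Zs k.
Proof.
  intros Hk.
  assert (H1 : is_series (fun j => / INR (S j) ^ k + (-1) ^ (S j) / INR (S j) ^ k) (Zs k + eta k)).
  { apply is_seriesR_plus; apply Series_correct. apply ex_series_invpow; auto. apply ex_eta; lia. }
  assert (H2 : is_series (fun j => / INR (S j) ^ k + (-1) ^ (S j) / INR (S j) ^ k) (2 / 2 ^ k * Zs k)).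
  { apply (sparse_series 2 _ (fun i => 2 / 2 ^ k * / INR (S i) ^ k)).
    - lia.
    - intros j Hj. rewrite pow_m1_mod. destruct (S j mod 2)%nat as [|[|r]] eqn:E; try lia.
      + simpl. field. apply pow_nonzero; apply Rgt_not_eq, INRS_pos.
      + pose proof (Nat.mod_upper_bound (S j) 2). lia.
    - intros i. replace (S (2 * S i - 1)) with (2 * S i)%nat by lia.
      rewrite pow_mult. replace ((-1)^2) with 1 by ring. rewrite pow1.
      rewrite mult_INR. replace (INR 2) with 2 by (simpl; ring). rewrite Rpow_mult_distr. field.
      split. apply pow_nonzero; apply Rgt_not_eq, INRS_pos. apply pow_nonzero. lra.
    - apply is_seriesR_scal. apply Series_correct, ex_series_invpow; auto. }
  pose proof (is_series_unique _ _ H1). pose proof (is_series_unique _ _ H2). lra.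
Qed.

Definition rr (k : nat) : R := (2 / 2 ^ k - 1) * (- / 2 + 3 / 2 * / 3 ^ k).

Lemma ReLi_Zs k : (2 <= k)%nat -> ReLi k aa = rr k * Zs k.
Proof.
  intros Hk. unfold ReLi. rewrite (is_series_unique _ _ (ReLi_decomp k ltac:(lia))).
  rewrite eta_zeta; auto. unfold rr. ring.
Qed.

Lemma isQ_rr k : isQ (rr k).
Proof.
  unfold rr. assert (isQ 2) by (replace 2 with (INR 2) by (simpl; ring); apply isQ_INR).
  assert (isQ 3) by (replace 3 with (INR 3) by (simpl; ring); apply isQ_INR).
  apply isQ_mult. apply isQ_minus. apply isQ_div; auto. apply isQ_pow; auto. apply isQ_1.
  apply isQ_plus. apply isQ_opp, isQ_inv; auto. apply isQ_mult. apply isQ_div; auto.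
  apply isQ_inv, isQ_pow; auto.
Qed.

Lemma rr_ne1 k : (2 <= k)%nat -> 1 - rr k <> 0.
Proof.
  intros Hk. unfold rr.
  assert (2 ^ k >= 4). { replace 4 with (2^2) by ring. apply Rle_ge, Rle_pow; lia || lra. }
  assert (3 ^ k >= 9). { replace 9 with (3^2) by ring. apply Rle_ge, Rle_pow; lia || lra. }
  assert (0 < 2 / 2 ^ k <= / 2). { split. apply Rdiv_lt_0_compat; lra.
    unfold Rdiv. apply (Rmult_le_reg_r (2^k)). lra. field_simplify; lra. }
  assert (0 < / 3 ^ k <= / 9). { split. apply Rinv_0_lt_compat; lra. apply Rinv_le_contravar; lra. }
  nra.
Qed.

Lemma Cl1 : ReLi 1 aa = 0.
Proof.
  unfold ReLi. rewrite (is_series_unique _ _ (ReLi_decomp 1 ltac:(lia))). simpl. field.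
Qed.


Lemma contR_mult (f g : R -> R) x : continuous f x -> continuous g x -> continuous (fun y => f y * g y) x.
Proof. intros. apply (continuous_mult (K := R_AbsRing) f g x); auto. Qed.
Lemma contR_plus (f g : R -> R) x : continuous f x -> continuous g x -> continuous (fun y => f y + g y) x.
Proof. intros. apply (continuous_plus (V := R_NormedModule) f g x); auto. Qed.
Lemma contR_minus (f g : R -> R) x : continuous f x -> continuous g x -> continuous (fun y => f y - g y) x.
Proof. intros. apply (continuous_minus (V := R_NormedModule) f g x); auto. Qed.
Lemma contR_const (c x : R) : continuous (fun _ => c) x.
Proof. apply continuous_const. Qed.
Lemma contR_id (x : R) : continuous (fun y => y) x.
Proof. apply continuous_id. Qed.

Lemma contR_der (f : R -> R) x : ex_derive f x -> continuous f x.
Proof. intros. apply (ex_derive_continuous (K := R_AbsRing) (V := R_NormedModule)); auto. Qed.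

Lemma cont_affine_cos (M phi x : R) : continuous (fun t => cos (M * t + phi)) x.
Proof. apply contR_der. auto_derive. auto. Qed.

Lemma ex_RInt_cont (f : R -> R) lo hi : lo <= hi -> (forall x, lo <= x <= hi -> continuous f x) ->
  ex_RInt f lo hi.
Proof.
  intros Hl Hc. apply (ex_RInt_continuous (V := R_CompleteNormedModule)). intros z Hz.
  rewrite Rmin_left, Rmax_right in Hz by lra. auto.
Qed.

Lemma RInt_bound (f : R -> R) lo hi B : lo <= hi -> ex_RInt f lo hi ->
  (forall t, lo <= t <= hi -> Rabs (f t) <= B) -> Rabs (RInt f lo hi) <= (hi - lo) * B.
Proof. intros. apply abs_RInt_le_const; auto. Qed.

Lemma RL_gen (f : R -> R) (b c phi : R) : b <= c ->
  (forall x, b <= x <= c -> continuous f x) ->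
  is_lim_seq (fun N => RInt (fun t => f t * cos ((INR N + / 2) * t + phi)) b c) 0.
Proof.
  intros Hbc Hf.
  destruct (Req_dec b c) as [Heq|Hne].
  { subst c. apply (is_lim_seq_ext (fun _ => 0)). intros. rewrite RInt_point. auto.
    apply is_lim_seq_const. }
  assert (Hlt : b < c) by lra. clear Hne.
  destruct (continuity_ab_maj (fun x => Rabs (f x)) b c Hbc) as [xm [HB Hxm]].
  { intros x Hx. apply continuity_pt_filterlim. apply continuous_Rabs_comp. auto. }
  set (B := Rabs (f xm)) in *.
  assert (HB0 : 0 <= B) by (apply Rabs_pos).
  assert (HU := Heine f (fun x => b <= x <= c) (compact_P3 b c)
          (fun x Hx => proj2 (continuity_pt_filterlim f x) (Hf x Hx))).
  apply is_lim_seq_spec. intros eps.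
  assert (He1 : 0 < eps / (c - b + 1)). { apply Rdiv_lt_0_compat. apply cond_pos. lra. }
  destruct (HU (mkposreal _ He1)) as [delta Hdelta]. simpl in Hdelta.
  set (eta := Rmin (Rmin delta (c - b)) (eps / (2 * (B + 1)))).
  assert (Heta : 0 < eta).
  { unfold eta. repeat apply Rmin_pos; try lra. apply cond_pos.
    apply Rdiv_lt_0_compat. apply cond_pos. lra. }
  assert (Htau : is_lim_seq (fun N => PI / (INR N + / 2)) 0).
  { replace (Finite 0) with (Rbar_mult PI 0) by (simpl; f_equal; ring).
    apply (is_lim_seq_scal_l (fun N => / (INR N + / 2)) PI 0).
    replace (Finite 0) with (Rbar_inv p_infty) by auto.
    apply is_lim_seq_inv. 2: discriminate.
    eapply is_lim_seq_plus. apply is_lim_seq_INR. apply is_lim_seq_const. simpl. reflexivity. }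
  apply is_lim_seq_spec in Htau. destruct (Htau (mkposreal _ Heta)) as [N0 HN0].
  exists N0. intros N HN. specialize (HN0 N HN). simpl in HN0.
  rewrite Rminus_0_r in *.
  set (M := INR N + / 2) in *.
  assert (HM : 0 < M) by (unfold M; pose proof (pos_INR N); lra).
  set (tau := PI / M) in *.
  assert (Htau0 : 0 < tau) by (unfold tau; apply Rdiv_lt_0_compat; auto; apply PI_RGT_0).
  rewrite Rabs_pos_eq in HN0 by lra.
  assert (Ht1 : tau < delta) by (eapply Rlt_le_trans; [apply HN0|]; unfold eta;
     eapply Rle_trans; [apply Rmin_l|apply Rmin_l]).
  assert (Ht2 : tau < c - b) by (eapply Rlt_le_trans; [apply HN0|]; unfold eta;
     eapply Rle_trans; [apply Rmin_l|apply Rmin_r]).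
  assert (Ht3 : tau < eps / (2 * (B + 1))) by (eapply Rlt_le_trans; [apply HN0|]; unfold eta; apply Rmin_r).
  set (g := fun t => f t * cos (M * t + phi)).
  set (h := fun u => f (u + tau) * cos (M * u + phi)).
  assert (Hgc : forall x, b <= x <= c -> continuous g x).
  { intros x Hx. apply contR_mult. auto. apply cont_affine_cos. }
  assert (Hhc : forall x, b - tau <= x <= c - tau -> continuous h x).
  { intros x Hx. apply contR_mult. 2: apply cont_affine_cos.
    apply (continuous_comp (fun u => u + tau) f). apply contR_plus. apply contR_id. apply contR_const.
    apply Hf. lra. }
  assert (Hg : ex_RInt g b c) by (apply ex_RInt_cont; auto).
  assert (Hsub : RInt g b c = - RInt h (b - tau) (c - tau)).
  { assert (E := RInt_comp_lin g 1 tau (b - tau) (c - tau)).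
    replace (1 * (b - tau) + tau) with b in E by ring.
    replace (1 * (c - tau) + tau) with c in E by ring.
    rewrite <- E; auto. transitivity (RInt (fun x => - h x) (b - tau) (c - tau)).
    2:{ apply (RInt_opp (V := R_CompleteNormedModule)). apply ex_RInt_cont. lra. auto. }
    apply RInt_ext. intros x _. unfold g, h, scal; simpl. unfold mult; simpl.
    replace (M * (1 * x + tau) + phi) with ((M * x + phi) + PI) by (unfold tau; field; lra).
    rewrite neg_cos. unfold opp; simpl. replace (1 * x + tau) with (x + tau) by ring. ring. }
  assert (E1 : RInt g b c = RInt g b (c - tau) + RInt g (c - tau) c).
  { symmetry. apply (RInt_Chasles g); apply ex_RInt_cont; try lra; intros; apply Hgc; lra. }
  assert (E2 : RInt h (b - tau) (c - tau) = RInt h (b - tau) b + RInt h b (c - tau)).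
  { symmetry. apply (RInt_Chasles h); apply ex_RInt_cont; try lra; intros; apply Hhc; lra. }
  assert (E3 : RInt g b (c - tau) - RInt h b (c - tau) = RInt (fun u => g u - h u) b (c - tau)).
  { symmetry. apply (RInt_minus g h); apply ex_RInt_cont; try lra; intros; try apply Hgc; try apply Hhc; lra. }
  assert (B1 : Rabs (RInt (fun u => g u - h u) b (c - tau)) <= (c - tau - b) * (eps / (c - b + 1))).
  { apply RInt_bound. lra. apply ex_RInt_cont. lra. intros; apply contR_minus; [apply Hgc|apply Hhc]; lra.
    intros t Ht. unfold g, h. rewrite <- Rmult_minus_distr_r, Rabs_mult.
    rewrite <- (Rmult_1_r (eps / (c - b + 1))). apply Rmult_le_compat; try apply Rabs_pos.
    apply Rlt_le, Hdelta; try lra. replace (t - (t + tau)) with (- tau) by ring.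
    rewrite Rabs_Ropp, Rabs_pos_eq; lra. apply Rabs_le, COS_bound. }
  assert (B2 : Rabs (RInt g (c - tau) c) <= (c - (c - tau)) * B).
  { apply RInt_bound. lra. apply ex_RInt_cont. lra. intros; apply Hgc; lra.
    intros t Ht. unfold g. rewrite Rabs_mult. rewrite <- (Rmult_1_r B).
    apply Rmult_le_compat; try apply Rabs_pos. apply HB; lra. apply Rabs_le, COS_bound. }
  assert (B3 : Rabs (RInt h (b - tau) b) <= (b - (b - tau)) * B).
  { apply RInt_bound. lra. apply ex_RInt_cont. lra. intros; apply Hhc; lra.
    intros t Ht. unfold h. rewrite Rabs_mult. rewrite <- (Rmult_1_r B).
    apply Rmult_le_compat; try apply Rabs_pos. apply HB; lra. apply Rabs_le, COS_bound. }
  fold g.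
  assert (Hsum : 2 * RInt g b c = RInt (fun u => g u - h u) b (c - tau) + RInt g (c - tau) c - RInt h (b - tau) b).
  { rewrite <- E3. rewrite Rmult_comm. replace (RInt g b c * 2) with (RInt g b c - - RInt g b c) by ring.
    rewrite Hsub at 2. rewrite E2. rewrite E1. ring. }
  assert (Rabs (2 * RInt g b c) <= (c - tau - b) * (eps / (c - b + 1)) + tau * B + tau * B).
  { rewrite Hsum.
    set (X := RInt (fun u => g u - h u) b (c - tau)) in *.
    set (Y := RInt g (c - tau) c) in *. set (Z := RInt h (b - tau) b) in *.
    assert (Rabs (X + Y - Z) <= Rabs X + Rabs Y + Rabs Z).
    { unfold Rminus. eapply Rle_trans. apply Rabs_triang. rewrite Rabs_Ropp.
      pose proof (Rabs_triang X Y). lra. }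
    replace (c - (c - tau)) with tau in B2 by ring. replace (b - (b - tau)) with tau in B3 by ring. lra. }
  rewrite Rabs_mult, Rabs_pos_eq in H by lra.
  assert ((c - tau - b) * (eps / (c - b + 1)) < eps).
  { apply (Rle_lt_trans _ ((c - b + 1) * (eps / (c - b + 1)) - 1 * (eps / (c - b + 1)))).
    assert (0 < eps / (c - b + 1)) by auto. nra.
    replace ((c - b + 1) * (eps / (c - b + 1))) with (pos eps) by (field; lra). 
    assert (0 < eps / (c - b + 1)) by auto. lra. }
  assert (tau * B <= eps / 2).
  { apply (Rle_trans _ (eps / (2 * (B + 1)) * B)). apply Rmult_le_compat_r; lra.
    replace (eps / (2 * (B + 1)) * B) with (eps / 2 * (B / (B + 1))) by (field; lra).
    rewrite <- (Rmult_1_r (eps / 2)) at 2. apply Rmult_le_compat_l.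
    pose proof (cond_pos eps); lra.
    apply (Rmult_le_reg_r (B + 1)). lra. unfold Rdiv. rewrite Rmult_assoc, Rinv_l; lra. }
  pose proof (cond_pos eps). lra.
Qed.


Ltac fold_INR := repeat match goal with
  |- context [match ?n with 0%nat => 1 | S _ => INR ?n + 1 end] =>
    change (match n with 0%nat => 1 | S _ => INR n + 1 end) with (INR (S n)) end.

Lemma RInt_FTC (F df : R -> R) lo hi : lo <= hi ->
  (forall x, lo <= x <= hi -> is_derive F x (df x)) ->
  (forall x, lo <= x <= hi -> continuous df x) -> RInt df lo hi = F hi - F lo.
Proof.
  intros Hl Hd Hc. apply is_RInt_unique.
  apply (is_RInt_derive (V := R_CompleteNormedModule) F df).
  - intros x Hx. rewrite Rmin_left, Rmax_right in Hx by lra. auto.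
  - intros x Hx. rewrite Rmin_left, Rmax_right in Hx by lra. auto.
Qed.

Lemma RInt_plusR (f g : R -> R) lo hi : ex_RInt f lo hi -> ex_RInt g lo hi ->
  RInt (fun x => f x + g x) lo hi = RInt f lo hi + RInt g lo hi.
Proof. intros. apply (RInt_plus (V := R_CompleteNormedModule)); auto. Qed.
Lemma RInt_minusR (f g : R -> R) lo hi : ex_RInt f lo hi -> ex_RInt g lo hi ->
  RInt (fun x => f x - g x) lo hi = RInt f lo hi - RInt g lo hi.
Proof. intros. apply (RInt_minus (V := R_CompleteNormedModule)); auto. Qed.
Lemma RInt_scalR (f : R -> R) c lo hi : ex_RInt f lo hi ->
  RInt (fun x => c * f x) lo hi = c * RInt f lo hi.
Proof. intros. apply (RInt_scal (V := R_CompleteNormedModule)); auto. Qed.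

Definition Cint (n : nat) (m : R) : R := RInt (fun t => (t - aa) ^ n * cos (m * t)) 0 aa.
Definition Sint (n : nat) (m : R) : R := RInt (fun t => (t - aa) ^ n * sin (m * t)) 0 aa.

Lemma cont_pc n m x : continuous (fun t => (t - aa) ^ n * cos (m * t)) x.
Proof. apply contR_der. auto_derive. auto. Qed.
Lemma cont_ps n m x : continuous (fun t => (t - aa) ^ n * sin (m * t)) x.
Proof. apply contR_der. auto_derive. auto. Qed.
Lemma ex_pc n m : ex_RInt (fun t => (t - aa) ^ n * cos (m * t)) 0 aa.
Proof. apply ex_RInt_cont. generalize aa_pos; lra. intros; apply cont_pc. Qed.
Lemma ex_ps n m : ex_RInt (fun t => (t - aa) ^ n * sin (m * t)) 0 aa.
Proof. apply ex_RInt_cont. generalize aa_pos; lra. intros; apply cont_ps. Qed.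

Lemma Cint_0 m : m <> 0 -> Cint 0 m = sin (m * aa) / m.
Proof.
  intros Hm. unfold Cint.
  rewrite (RInt_FTC (fun t => sin (m * t) / m)).
  - rewrite Rmult_0_r, sin_0. field. auto.
  - generalize aa_pos; lra.
  - intros x _. auto_derive. auto. simpl. field. auto.
  - intros; apply cont_pc.
Qed.

Lemma Sint_0 m : m <> 0 -> Sint 0 m = (1 - cos (m * aa)) / m.
Proof.
  intros Hm. unfold Sint.
  rewrite (RInt_FTC (fun t => - cos (m * t) / m)).
  - rewrite Rmult_0_r, cos_0. field. auto.
  - generalize aa_pos; lra.
  - intros x _. auto_derive. auto. simpl. field. auto.
  - intros; apply cont_ps.
Qed.

Lemma Cint_S n m : m <> 0 -> Cint (S n) m = - (INR (S n) / m) * Sint n m.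
Proof.
  intros Hm.
  assert (E : RInt (fun t => INR (S n) / m * ((t - aa) ^ n * sin (m * t)) + (t - aa) ^ (S n) * cos (m * t)) 0 aa = 0).
  { rewrite (RInt_FTC (fun t => (t - aa) ^ (S n) * sin (m * t) / m)).
    - rewrite Rmult_0_r, sin_0, Rminus_diag. simpl. field. auto.
    - generalize aa_pos; lra.
    - intros x _. auto_derive. auto. fold_INR. unfold Rminus. rewrite <- ?tech_pow_Rmult. field. auto.
    - intros; apply contR_plus. apply contR_mult. apply contR_const. apply cont_ps. apply cont_pc. }
  rewrite RInt_plusR in E. rewrite RInt_scalR in E. unfold Cint, Sint. lra.
  apply ex_ps. apply (ex_RInt_scal (V := R_NormedModule) _ _ _ (INR (S n) / m)). apply ex_ps.
  apply ex_pc.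
Qed.

Lemma Sint_S n m : m <> 0 -> Sint (S n) m = (- aa) ^ (S n) / m + INR (S n) / m * Cint n m.
Proof.
  intros Hm.
  assert (E : RInt (fun t => - (INR (S n) / m) * ((t - aa) ^ n * cos (m * t)) + (t - aa) ^ (S n) * sin (m * t)) 0 aa
     = (- aa) ^ (S n) / m).
  { rewrite (RInt_FTC (fun t => - (t - aa) ^ (S n) * cos (m * t) / m)).
    - rewrite Rmult_0_r, cos_0, Rminus_diag. replace (0 - aa) with (- aa) by ring. simpl. field. auto.
    - generalize aa_pos; lra.
    - intros x _. auto_derive. auto. fold_INR. unfold Rminus. rewrite <- ?tech_pow_Rmult. field. auto.
    - intros; apply contR_plus. apply contR_mult. apply contR_const. apply cont_pc. apply cont_ps. }
  rewrite RInt_plusR in E. rewrite RInt_scalR in E. unfold Cint, Sint. lra.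
  apply ex_pc. apply (ex_RInt_scal (V := R_NormedModule) _ _ _ (- (INR (S n) / m))). apply ex_pc.
  apply ex_ps.
Qed.

Lemma INRS_neq j : INR (S j) <> 0.
Proof. apply Rgt_not_eq, INRS_pos. Qed.

Lemma Cint_Sint_bound n : exists K, 0 <= K /\ forall j,
  Rabs (Cint n (INR (S j))) <= K / INR (S j) /\ Rabs (Sint n (INR (S j))) <= K / INR (S j).
Proof.
  induction n.
  - exists 2. split. lra. intros j. pose proof (INRS_pos j).
    rewrite Cint_0, Sint_0 by apply INRS_neq. unfold Rdiv.
    rewrite !Rabs_mult, (Rabs_pos_eq (/ _)) by (apply Rlt_le, Rinv_0_lt_compat; auto).
    split; apply Rmult_le_compat_r; try (apply Rlt_le, Rinv_0_lt_compat; auto).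
    pose proof (SIN_bound (INR (S j) * aa)). apply Rabs_le in H0. lra.
    pose proof (COS_bound (INR (S j) * aa)). apply Rabs_le. lra.
  - destruct IHn as [K [HK H]].
    exists (aa ^ (S n) + INR (S n) * K). split.
    { apply Rplus_le_le_0_compat. apply pow_le. generalize aa_pos; lra. apply Rmult_le_pos; auto. apply pos_INR. }
    intros j. destruct (H j) as [H1 H2]. pose proof (INRS_pos j) as Hm.
    assert (Hm1 : 1 <= INR (S j)) by (apply (le_INR 1); lia).
    assert (HK1 : K / INR (S j) <= K).
    { unfold Rdiv. rewrite <- (Rmult_1_r K) at 2. apply Rmult_le_compat_l; auto.
      rewrite <- Rinv_1. apply Rinv_le_contravar; lra. }
    assert (Ha : 0 <= aa ^ S n) by (apply pow_le; generalize aa_pos; lra).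
    assert (Hn : 0 <= INR (S n)) by apply pos_INR.
    rewrite Cint_S, Sint_S by apply INRS_neq. split.
    + rewrite Rabs_mult, Rabs_Ropp, Rabs_pos_eq by (apply Rdiv_le_0_compat; auto).
      apply (Rle_trans _ (INR (S n) / INR (S j) * K)). apply Rmult_le_compat_l.
      apply Rdiv_le_0_compat; auto. lra.
      unfold Rdiv. apply (Rmult_le_reg_r (INR (S j))). auto. field_simplify; try apply INRS_neq. nra.
    + eapply Rle_trans. apply Rabs_triang. rewrite Rabs_mult, (Rabs_pos_eq (INR (S n) / _)) by (apply Rdiv_le_0_compat; auto).
      unfold Rdiv at 1. rewrite Rabs_mult, <- RPow_abs, Rabs_Ropp, (Rabs_pos_eq aa) by (generalize aa_pos; lra).
      rewrite (Rabs_pos_eq (/ _)) by (apply Rlt_le, Rinv_0_lt_compat; auto).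
      apply (Rle_trans _ (aa ^ S n * / INR (S j) + INR (S n) / INR (S j) * K)).
      apply Rplus_le_compat_l. apply Rmult_le_compat_l. apply Rdiv_le_0_compat; auto. lra.
      unfold Rdiv. apply Req_le. field. apply INRS_neq.
Qed.

Definition Cterm (n e : nat) : nat -> R := fun j => Cint n (INR (S j)) / INR (S j) ^ e.
Definition Sterm (n e : nat) : nat -> R := fun j => Sint n (INR (S j)) / INR (S j) ^ e.

Lemma bound_over (x K : R) j e : (1 <= e)%nat -> Rabs x <= K / INR (S j) ->
  Rabs (x / INR (S j) ^ e) <= K / INR (S j) ^ 2.
Proof.
  intros He Hx. pose proof (INRS_pos j) as Hm.
  assert (Hm1 : 1 <= INR (S j)) by (apply (le_INR 1); lia).
  unfold Rdiv. rewrite Rabs_mult, Rabs_inv, <- RPow_abs, (Rabs_pos_eq (INR _)) by lra.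
  assert (0 <= K) by (pose proof (Rabs_pos x); assert (0 <= K / INR (S j)) by lra;
     apply (Rmult_le_reg_r (/ INR (S j))); [apply Rinv_0_lt_compat; auto|]; lra).
  apply (Rle_trans _ (K / INR (S j) * / INR (S j) ^ e)).
  apply Rmult_le_compat_r. apply Rlt_le, Rinv_0_lt_compat, pow_lt; auto. auto.
  replace (K / INR (S j) * / INR (S j) ^ e) with (K * / INR (S j) ^ (S e)).
  2:{ rewrite <- tech_pow_Rmult. field. split; [apply pow_nonzero|]; lra. }
  apply Rmult_le_compat_l; auto. apply Rinv_le_contravar. apply pow_lt; lra. apply Rle_pow; auto. lia.
Qed.

Lemma ex_Cterm n e : (1 <= e)%nat -> ex_series (Cterm n e).
Proof.
  intros He. destruct (Cint_Sint_bound n) as [K [HK H]].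
  apply (ex_series_bound _ K). intros j. unfold Cterm. apply bound_over. exact He. apply (proj1 (H j)).
Qed.
Lemma ex_Sterm n e : (1 <= e)%nat -> ex_series (Sterm n e).
Proof.
  intros He. destruct (Cint_Sint_bound n) as [K [HK H]].
  apply (ex_series_bound _ K). intros j. unfold Sterm. apply bound_over. exact He. apply (proj2 (H j)).
Qed.

Lemma ex_ReLi e : (2 <= e)%nat -> ex_series (fun j => cos (INR (S j) * aa) / INR (S j) ^ e).
Proof.
  intros He. apply (ex_series_bound _ 1). intros j. unfold Rdiv. rewrite Rabs_mult.
  rewrite (Rabs_pos_eq (/ _)) by (apply Rlt_le, Rinv_0_lt_compat, pow_lt, INRS_pos).
  apply (Rle_trans _ (1 * / INR (S j) ^ e)). apply Rmult_le_compat_r.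
  apply Rlt_le, Rinv_0_lt_compat, pow_lt, INRS_pos. apply Rabs_le, COS_bound.
  rewrite Rmult_1_l. apply (invpow_le2 j e He).
Qed.
Lemma ex_ImLi e : (2 <= e)%nat -> ex_series (fun j => sin (INR (S j) * aa) / INR (S j) ^ e).
Proof.
  intros He. apply (ex_series_bound _ 1). intros j. unfold Rdiv. rewrite Rabs_mult.
  rewrite (Rabs_pos_eq (/ _)) by (apply Rlt_le, Rinv_0_lt_compat, pow_lt, INRS_pos).
  apply (Rle_trans _ (1 * / INR (S j) ^ e)). apply Rmult_le_compat_r.
  apply Rlt_le, Rinv_0_lt_compat, pow_lt, INRS_pos. apply Rabs_le, SIN_bound.
  rewrite Rmult_1_l. apply (invpow_le2 j e He).
Qed.

Lemma SC0 e : Series (Cterm 0 e) = ImLi (S e) aa.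
Proof.
  unfold ImLi. apply Series_ext. intros j. unfold Cterm. rewrite Cint_0 by apply INRS_neq.
  rewrite <- ?tech_pow_Rmult. field. split; try apply pow_nonzero; apply INRS_neq.
Qed.

Lemma SS0 e : (1 <= e)%nat -> Series (Sterm 0 e) = Zs (S e) - ReLi (S e) aa.
Proof.
  intros He. apply is_series_unique.
  apply (is_seriesR_ext (fun j => / INR (S j) ^ (S e) - cos (INR (S j) * aa) / INR (S j) ^ (S e))).
  - intros j. unfold Sterm. rewrite Sint_0 by apply INRS_neq. rewrite <- ?tech_pow_Rmult. field.
    split; try apply pow_nonzero; apply INRS_neq.
  - apply is_seriesR_minus; apply Series_correct. apply ex_series_invpow; lia. apply ex_ReLi; lia.
Qed.

Lemma SCS n e : Series (Cterm (S n) e) = - INR (S n) * Series (Sterm n (S e)).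
Proof.
  rewrite <- Series_scal_l. apply Series_ext. intros j. unfold Cterm, Sterm.
  rewrite Cint_S by apply INRS_neq. rewrite <- ?tech_pow_Rmult. field. split; try apply pow_nonzero; apply INRS_neq.
Qed.

Lemma SSS n e : (1 <= e)%nat ->
  Series (Sterm (S n) e) = (- aa) ^ (S n) * Zs (S e) + INR (S n) * Series (Cterm n (S e)).
Proof.
  intros He. apply is_series_unique.
  apply (is_seriesR_ext (fun j => (- aa) ^ (S n) * / INR (S j) ^ (S e) + INR (S n) * Cterm n (S e) j)).
  - intros j. unfold Cterm, Sterm. rewrite Sint_S by apply INRS_neq. rewrite <- ?tech_pow_Rmult. field.
    split; try apply pow_nonzero; apply INRS_neq.
  - apply is_seriesR_plus; apply is_seriesR_scal; apply Series_correct.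
    apply ex_series_invpow; lia. apply ex_Cterm; lia.
Qed.


Fixpoint topC (n e : nat) : R :=
  match n with O => ImLi (S e) aa | S n' => - INR (S n') * topS n' (S e) end
with topS (n e : nat) : R :=
  match n with O => Zs (S e) - ReLi (S e) aa | S n' => INR (S n') * topC n' (S e) end.

Definition Good (e : nat) : Prop :=
  cls (Nat.odd e) e (Zs e) /\ SpanRe e (Cl e aa) /\ SpanIm e (Gl e aa).
Definition IHbelow (k : nat) : Prop := forall e, (2 <= e < k)%nat -> Good e.

Lemma isQ_INR' n : isQ (INR n). Proof. apply isQ_INR. Qed.
Lemma INRS_neq0 n : INR (S n) <> 0. Proof. apply INRS_neq. Qed.

Lemma rest_lemma n : forall e, (1 <= e)%nat -> IHbelow (n + e + 1) ->
  cls (Nat.odd e) (n + e + 1) (Series (Cterm n e) - topC n e) /\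
  cls (Nat.even e) (n + e + 1) (Series (Sterm n e) - topS n e).
Proof.
  induction n; intros e He IH.
  - split.
    + rewrite SC0. simpl. rewrite Rminus_diag. apply cls_0.
    + rewrite SS0 by auto. simpl. rewrite Rminus_diag. apply cls_0.
  - assert (IH' : IHbelow (n + S e + 1)) by (replace (n + S e + 1)%nat with (S n + e + 1)%nat by lia; auto).
    destruct (IHn (S e) ltac:(lia) IH') as [HC HS].
    replace (n + S e + 1)%nat with (S n + e + 1)%nat in HC, HS by lia.
    rewrite Nat.odd_succ in HC. rewrite Nat.even_succ in HS.
    split.
    + rewrite SCS. change (topC (S n) e) with (- INR (S n) * topS n (S e)).
      replace (- INR (S n) * Series (Sterm n (S e)) - - INR (S n) * topS n (S e))
        with (- INR (S n) * (Series (Sterm n (S e)) - topS n (S e))) by ring.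
      apply cls_scal. apply isQ_opp, isQ_INR. auto.
    + rewrite SSS by auto. change (topS (S n) e) with (INR (S n) * topC n (S e)).
      replace ((- aa) ^ S n * Zs (S e) + INR (S n) * Series (Cterm n (S e)) - INR (S n) * topC n (S e))
        with ((- aa) ^ S n * Zs (S e) + INR (S n) * (Series (Cterm n (S e)) - topC n (S e))) by ring.
      apply cls_plus.
      * destruct (IH (S e) ltac:(lia)) as [HZ _]. rewrite Nat.odd_succ in HZ.
        apply (cls_mul_aa _ _ _ (S e)). lia. auto.
      * apply cls_scal. apply isQ_INR. auto.
Qed.

Definition TC (n k : nat) : R := if Nat.even n then ImLi k aa else Zs k - ReLi k aa.
Definition TS (n k : nat) : R := if Nat.even n then Zs k - ReLi k aa else ImLi k aa.

Lemma top_lemma n : forall e,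
  (exists q, isQ q /\ q <> 0 /\ topC n e = q * TC n (n + e + 1)) /\
  (exists q, isQ q /\ q <> 0 /\ topS n e = q * TS n (n + e + 1)).
Proof.
  induction n; intros e.
  - split; exists 1; (split; [apply isQ_1|split; [lra|]]); unfold TC, TS; simpl;
    replace (e + 1)%nat with (S e) by lia; ring.
  - destruct (IHn (S e)) as [[q1 [Hq1 [Hq1' E1]]] [q2 [Hq2 [Hq2' E2]]]].
    replace (n + S e + 1)%nat with (S n + e + 1)%nat in E1, E2 by lia.
    split.
    + exists (- INR (S n) * q2). split. apply isQ_mult; auto. apply isQ_opp, isQ_INR.
      split. apply Rmult_integral_contrapositive; split; auto. apply Ropp_neq_0_compat, INRS_neq0.
      change (topC (S n) e) with (- INR (S n) * topS n (S e)). rewrite E2. unfold TC, TS. rewrite Nat.even_succ, <- Nat.negb_even.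
      destruct (Nat.even n); unfold negb; ring.
    + exists (INR (S n) * q1). split. apply isQ_mult; auto. apply isQ_INR.
      split. apply Rmult_integral_contrapositive; split; auto. apply INRS_neq0.
      change (topS (S n) e) with (INR (S n) * topC n (S e)). rewrite E1. unfold TC, TS. rewrite Nat.even_succ, <- Nat.negb_even.
      destruct (Nat.even n); unfold negb; ring.
Qed.

Lemma Good_step k (HRe : forall n, SpanRe (n + 2) (Series (Cterm n 1)))
  (HIm : forall n, SpanIm (n + 2) (Series (Sterm n 1))) :
  (2 <= k)%nat -> IHbelow k -> Good k.
Proof.
  intros Hk IH. set (n := (k - 2)%nat). assert (Ek : k = (n + 1 + 1)%nat) by (unfold n; lia).
  rewrite Ek in IH. destruct (rest_lemma n 1 ltac:(lia) IH) as [HC HS].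
  simpl in HC, HS.
  destruct (top_lemma n 1) as [[q1 [Hq1 [Hq1' E1]]] [q2 [Hq2 [Hq2' E2]]]].
  replace (n + 1 + 1)%nat with (n + 2)%nat in *by lia.
  assert (TCre : SpanRe (n + 2) (TC n (n + 2))).
  { apply (SpanRe_unscal _ q1); auto. rewrite <- E1.
    replace (topC n 1) with (Series (Cterm n 1) - (Series (Cterm n 1) - topC n 1)) by ring.
    apply SpanRe_minus; auto. }
  assert (TSim : SpanIm (n + 2) (TS n (n + 2))).
  { apply (SpanIm_unscal _ q2); auto. rewrite <- E2.
    replace (topS n 1) with (Series (Sterm n 1) - (Series (Sterm n 1) - topS n 1)) by ring.
    apply SpanIm_minus; auto. }
  replace k with (n + 2)%nat by lia.
  assert (Hev : Nat.even (n + 2) = Nat.even n).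
  { rewrite Nat.even_add. simpl. destruct (Nat.even n); auto. }
  assert (Hod : Nat.odd (n + 2) = negb (Nat.even n)). { rewrite <- Nat.negb_even, Hev. auto. }
  assert (Hrr : ReLi (n + 2) aa = rr (n + 2) * Zs (n + 2)) by (apply ReLi_Zs; lia).
  assert (Hr1 := rr_ne1 (n + 2) ltac:(lia)).
  assert (HZ : Zs (n + 2) - ReLi (n + 2) aa = (1 - rr (n + 2)) * Zs (n + 2)) by (rewrite Hrr; ring).
  assert (Hq : isQ (1 - rr (n + 2))) by (apply isQ_minus; [apply isQ_1|apply isQ_rr]).
  unfold TC, TS in *. unfold Good, Cl, Gl. rewrite Hev, Hod.
  destruct (Nat.even n) eqn:En; simpl.
  - rewrite HZ in TSim. apply SpanIm_unscal in TSim; auto.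
    split; auto. split; auto. rewrite Hrr. apply SpanIm_scal; auto. apply isQ_rr.
  - rewrite HZ in TCre. apply SpanRe_unscal in TCre; auto.
    split; auto. split; auto. rewrite Hrr. apply SpanRe_scal; auto. apply isQ_rr.
Qed.

Lemma Good_all (HRe : forall n, SpanRe (n + 2) (Series (Cterm n 1)))
  (HIm : forall n, SpanIm (n + 2) (Series (Sterm n 1))) :
  forall k, (2 <= k)%nat -> Good k.
Proof.
  intros k. induction k as [k IHk] using (well_founded_induction Wf_nat.lt_wf).
  intros Hk. apply Good_step; auto. intros e He. apply IHk; lia.
Qed.


Definition sc (u : R) : R := if Req_EM_T u 0 then 1 else sin u / u.

Lemma sc_cont0 : continuous sc 0.
Proof.
  apply continuity_pt_filterlim. intros eps Heps.
  destruct (derivable_pt_lim_sin_0 eps Heps) as [del Hdel].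
  exists del. split. apply cond_pos. intros x [[_ Hx0] Hxd].
  simpl in *. unfold R_dist in *. rewrite Rminus_0_r in Hxd.
  unfold sc. destruct (Req_EM_T x 0) as [E|E]. exfalso; auto.
  destruct (Req_EM_T 0 0) as [_|E']; [|exfalso; auto].
  specialize (Hdel x E Hxd). rewrite Rplus_0_l, sin_0, Rminus_0_r in Hdel. auto.
Qed.

Lemma ball_R (c e y : R) : ball c e y -> Rabs (y - c) < e.
Proof. intros H. exact H. Qed.

Lemma sc_cont u : u <> 0 -> continuous sc u.
Proof.
  intros Hu. apply (continuous_ext_loc _ (fun y => sin y / y)).
  - assert (Hp : 0 < Rabs u) by (apply Rabs_pos_lt; auto).
    exists (mkposreal _ Hp). intros y Hy. apply ball_R in Hy. simpl in Hy.
    unfold sc. destruct (Req_EM_T y 0) as [E|E]; auto.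
    subst y. rewrite Rminus_0_l, Rabs_Ropp in Hy. lra.
  - apply contR_der. auto_derive. auto.
Qed.

Lemma sc_pos u : 0 <= u < PI -> 0 < sc u.
Proof.
  intros Hu. unfold sc. destruct (Req_EM_T u 0). lra.
  apply Rdiv_lt_0_compat. apply sin_gt_0; lra. lra.
Qed.

Lemma sc_val u : u <> 0 -> sc u = sin u / u.
Proof. intros. unfold sc. destruct (Req_EM_T u 0); auto. contradiction. Qed.

Fixpoint Gp (n : nat) (x y : R) : R :=
  match n with O => 1 | S n' => x ^ (S n') + y * Gp n' x y end.

Lemma Gp_id n x y : x ^ (S n) - y ^ (S n) = (x - y) * Gp n x y.
Proof.
  induction n.
  - simpl. ring.
  - change (Gp (S n) x y) with (x ^ (S n) + y * Gp n x y).
    replace (x ^ S (S n) - y ^ S (S n)) with (x * x ^ S n - y * y ^ S n) by (simpl; ring).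
    replace (y * y ^ S n) with (y * x ^ S n - y * (x ^ S n - y ^ S n)) by ring.
    rewrite IHn. ring.
Qed.

Lemma Gp_cont n x : continuous (fun t => Gp n (t - aa) (- aa)) x.
Proof.
  induction n.
  - apply contR_const.
  - apply contR_plus. apply contR_der. auto_derive. auto.
    apply contR_mult. apply contR_const. auto.
Qed.

Definition Qf (n : nat) (t : R) : R := ((t - aa) ^ (S n) - (- aa) ^ (S n)) / INR (S n).
Definition Rf (n : nat) (t : R) : R := Gp n (t - aa) (- aa) / INR (S n).
Definition hx (n : nat) (t : R) : R := Rf n t * / sc (t / 2).

Lemma Qf_Rf n t : Qf n t = t * Rf n t.
Proof. unfold Qf, Rf. rewrite Gp_id. unfold Rdiv. replace (t - aa - - aa) with t by ring. ring. Qed.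

Lemma Qf_0 n : Qf n 0 = 0.
Proof. rewrite Qf_Rf. ring. Qed.

Lemma Rf_cont n x : continuous (Rf n) x.
Proof. unfold Rf. apply contR_mult. apply Gp_cont. apply contR_const. Qed.

Lemma hx_cont n x : 0 <= x < 2 -> continuous (hx n) x.
Proof.
  intros Hx. unfold hx. apply contR_mult. apply Rf_cont.
  apply continuous_Rinv_comp.
  - apply (continuous_comp (fun t => t / 2) sc). apply contR_der. auto_derive. auto.
    destruct (Req_dec x 0) as [E|E]. subst x. replace (0 / 2) with 0 by field. apply sc_cont0.
    apply sc_cont. lra.
  - apply Rgt_not_eq, sc_pos. generalize PI2_1. lra.
Qed.

Lemma sin_half_pos t : 0 < t < 2 * PI -> 0 < sin (t / 2).
Proof. intros. apply sin_gt_0; lra. Qed.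

Lemma hx_id n t : 0 < t < 2 * PI -> hx n t * (2 * sin (t / 2)) = Qf n t.
Proof.
  intros Ht. unfold hx. rewrite sc_val by lra. rewrite Qf_Rf.
  pose proof (sin_half_pos t Ht). field. split; lra.
Qed.

Lemma prod_ss A B : 2 * sin B * sin A = cos (A - B) - cos (A + B).
Proof. rewrite cos_minus, cos_plus. ring. Qed.
Lemma prod_sc A B : 2 * sin B * cos A = sin (A + B) - sin (A - B).
Proof. rewrite sin_minus, sin_plus. ring. Qed.

Lemma sum_SnR (f : nat -> R) N : sum_n f (S N) = sum_n f N + f (S N).
Proof. apply (sum_Sn (G := R_AbelianMonoid)). Qed.
Lemma sum_OR (f : nat -> R) : sum_n f 0 = f 0%nat.
Proof. apply (sum_O (G := R_AbelianMonoid)). Qed.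

Lemma sum_sin t N : 2 * sin (t / 2) * sum_n (fun j => sin (INR (S j) * t)) N =
  cos (t / 2) - cos ((INR (S N) + / 2) * t).
Proof.
  induction N.
  - rewrite sum_O. rewrite prod_ss. f_equal; f_equal; simpl; field.
  - rewrite sum_SnR. rewrite Rmult_plus_distr_l, IHN, prod_ss.
    replace (INR (S (S N)) * t - t / 2) with ((INR (S N) + / 2) * t) by (rewrite (S_INR (S N)); field).
    replace (INR (S (S N)) * t + t / 2) with ((INR (S (S N)) + / 2) * t) by field. ring.
Qed.

Lemma sum_cos t N : 2 * sin (t / 2) * sum_n (fun j => cos (INR (S j) * t)) N =
  sin ((INR (S N) + / 2) * t) - sin (t / 2).
Proof.
  induction N.
  - rewrite sum_O. rewrite prod_sc. f_equal; f_equal; simpl; field.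
  - rewrite sum_SnR. rewrite Rmult_plus_distr_l, IHN, prod_sc.
    replace (INR (S (S N)) * t - t / 2) with ((INR (S N) + / 2) * t) by (rewrite (S_INR (S N)); field).
    replace (INR (S (S N)) * t + t / 2) with ((INR (S (S N)) + / 2) * t) by field. ring.
Qed.

Lemma ex_RInt_sum (f : nat -> R -> R) N lo hi : (forall j, ex_RInt (f j) lo hi) ->
  ex_RInt (fun x => sum_n (fun j => f j x) N) lo hi.
Proof.
  intros H. induction N.
  - apply (ex_RInt_ext (f 0%nat)). intros; rewrite sum_O; auto. auto.
  - apply (ex_RInt_ext (fun x => sum_n (fun j => f j x) N + f (S N) x)).
    intros; rewrite sum_Sn; auto. apply (ex_RInt_plus (V := R_NormedModule)); auto.
Qed.

Lemma RInt_sum (f : nat -> R -> R) N lo hi : (forall j, ex_RInt (f j) lo hi) ->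
  RInt (fun x => sum_n (fun j => f j x) N) lo hi = sum_n (fun j => RInt (f j) lo hi) N.
Proof.
  intros H. induction N.
  - rewrite sum_O. apply RInt_ext. intros; rewrite sum_O; auto.
  - rewrite sum_Sn. rewrite <- IHN. unfold plus; simpl.
    rewrite <- RInt_plusR; auto. apply RInt_ext. intros; rewrite sum_Sn; auto.
    apply ex_RInt_sum; auto.
Qed.

Lemma sum_n_multR (c : R) (f : nat -> R) N : sum_n (fun j => c * f j) N = c * sum_n f N.
Proof. apply (sum_n_mult_l c f N). Qed.
Lemma sum_n_plusR (f g : nat -> R) N : sum_n (fun j => f j + g j) N = sum_n f N + sum_n g N.
Proof. apply (sum_n_plus f g N). Qed.


Lemma lim_plusR (u v : nat -> R) (a b : R) : is_lim_seq u a -> is_lim_seq v b ->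
  is_lim_seq (fun n => u n + v n) (a + b).
Proof. intros H1 H2. exact (is_lim_seq_plus' u v a b H1 H2). Qed.
Lemma lim_minusR (u v : nat -> R) (a b : R) : is_lim_seq u a -> is_lim_seq v b ->
  is_lim_seq (fun n => u n - v n) (a - b).
Proof. intros H1 H2. exact (is_lim_seq_minus' u v a b H1 H2). Qed.
Lemma lim_scalR (u : nat -> R) (c a : R) : is_lim_seq u a -> is_lim_seq (fun n => c * u n) (c * a).
Proof. intros H1. exact (is_lim_seq_scal_l u c a H1). Qed.
Lemma lim_constR (c : R) : is_lim_seq (fun _ => c) c.
Proof. apply is_lim_seq_const. Qed.

Lemma sum_n_extR (f g : nat -> R) N : (forall j, f j = g j) -> sum_n f N = sum_n g N.
Proof. intros. apply (sum_n_ext (G := R_AbelianMonoid)); auto. Qed.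
Lemma sum_n_oppR (f : nat -> R) N : sum_n (fun j => - f j) N = - sum_n f N.
Proof.
  replace (- sum_n f N) with (-1 * sum_n f N) by ring. rewrite <- sum_n_multR.
  apply sum_n_extR. intros; ring.
Qed.

Lemma RInt_extR (f g : R -> R) a b : (forall x, Rmin a b < x < Rmax a b -> f x = g x) ->
  RInt f a b = RInt g a b.
Proof. intros. apply (RInt_ext (V := R_CompleteNormedModule)); auto. Qed.

Lemma RInt_constR (c a b : R) : RInt (fun _ => c) a b = (b - a) * c.
Proof. rewrite RInt_const. reflexivity. Qed.

Lemma cos_shift_sin x : cos (x + - (PI / 2)) = sin x.
Proof. rewrite cos_plus, cos_neg, sin_neg, cos_PI2, sin_PI2. ring. Qed.

Lemma sin_nPI j : sin (INR j * PI) = 0.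
Proof. apply sin_eq_0_1. exists (Z.of_nat j). rewrite INR_IZR_INZ. auto. Qed.

Lemma RL_shift (f : R -> R) b c phi : b <= c -> (forall x, b <= x <= c -> continuous f x) ->
  is_lim_seq (fun N => RInt (fun t => f t * cos ((INR (S N) + / 2) * t + phi)) b c) 0.
Proof.
  intros. apply (is_lim_seq_incr_1 (fun N => RInt (fun t => f t * cos ((INR N + / 2) * t + phi)) b c)).
  apply RL_gen; auto.
Qed.

Definition kk (t : R) : R := / (2 * sin (t / 2)).

Lemma kk_cont t : aa <= t <= PI -> continuous kk t.
Proof.
  intros Ht. unfold kk. apply continuous_Rinv_comp. apply contR_der. auto_derive. auto.
  apply Rgt_not_eq. assert (0 < sin (t / 2)) by (apply sin_gt_0; generalize aa_pos; lra). lra.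
Qed.

Lemma Gl1_series : is_series (fun j => sin (INR (S j) * aa) / INR (S j) ^ 1) aa.
Proof.
  assert (Haa : aa < PI) by apply aa_lt_PI. assert (Ha0 := aa_pos).
  assert (E : forall N, sum_n (fun j => sin (INR (S j) * aa) / INR (S j) ^ 1) N =
     (PI - aa) / 2 - RInt (fun t => kk t * cos ((INR (S N) + / 2) * t + - (PI / 2))) aa PI).
  { intros N. match goal with |- ?a = ?b => change (@eq R a b) end.
    transitivity (- RInt (fun t => sum_n (fun j => cos (INR (S j) * t)) N) aa PI).
    - rewrite RInt_sum. rewrite <- sum_n_oppR. apply sum_n_extR. intros j.
      rewrite (RInt_FTC (fun t => sin (INR (S j) * t) / INR (S j))).
      + rewrite sin_nPI, pow_1. field. apply INRS_neq.
      + lra.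
      + intros x _. auto_derive. auto. fold_INR. field. apply INRS_neq.
      + intros; apply contR_der; auto_derive; auto.
      + intros j. apply ex_RInt_cont. lra. intros; apply contR_der; auto_derive; auto.
    - rewrite (RInt_extR _ (fun t => kk t * cos ((INR (S N) + / 2) * t + - (PI / 2)) - / 2)).
      + rewrite RInt_minusR. rewrite RInt_constR. field.
        apply ex_RInt_cont. lra. intros; apply contR_mult. apply kk_cont; lra. apply cont_affine_cos.
        apply ex_RInt_cont. lra. intros; apply contR_const.
      + intros t Ht. rewrite Rmin_left, Rmax_right in Ht by lra.
        assert (Hs : 0 < sin (t / 2)) by (apply sin_gt_0; lra).
        apply (Rmult_eq_reg_l (2 * sin (t / 2))). 2: lra.
        rewrite sum_cos, cos_shift_sin. unfold kk. field. lra. }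
  apply is_series_of_lim. apply (is_lim_seq_ext _ _ _ (fun N => eq_sym (E N))).
  replace aa with ((PI - aa) / 2 - 0) at 1 by (unfold aa; field).
  apply lim_minusR. apply lim_constR. apply RL_shift. lra. intros; apply kk_cont; lra.
Qed.

Lemma Cl1_series : is_series (fun j => cos (INR (S j) * aa) / INR (S j) ^ 1) 0.
Proof.
  assert (H := ReLi_decomp 1 ltac:(lia)).
  replace (- / 2 * eta 1 + 3 / 2 * (/ 3 ^ 1 * eta 1)) with 0 in H by (simpl; field). auto.
Qed.

Lemma cont_Qf_sin n m x : continuous (fun t => Qf n t * sin (m * t)) x.
Proof. apply contR_der. unfold Qf. auto_derive. auto. Qed.
Lemma cont_Qf_cos n m x : continuous (fun t => Qf n t * cos (m * t)) x.
Proof. apply contR_der. unfold Qf. auto_derive. auto. Qed.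
Lemma cont_Qf n x : continuous (Qf n) x.
Proof. apply contR_der. unfold Qf. auto_derive. auto. Qed.

Lemma Cterm_split n j : Cterm n 1 j =
  Qf n aa * (cos (INR (S j) * aa) / INR (S j) ^ 1) + RInt (fun t => Qf n t * sin (INR (S j) * t)) 0 aa.
Proof.
  set (m := INR (S j)). assert (Hm : m <> 0) by apply INRS_neq. assert (Ha := aa_pos).
  assert (E : RInt (fun t => / m * ((t - aa) ^ n * cos (m * t)) - Qf n t * sin (m * t)) 0 aa
     = Qf n aa * cos (m * aa) / m - Qf n 0 * cos (m * 0) / m).
  { rewrite (RInt_FTC (fun t => Qf n t * cos (m * t) / m)). auto. lra.
    - intros x _. unfold Qf. auto_derive. auto. fold_INR. unfold Rminus. rewrite <- ?tech_pow_Rmult.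
      field. split; auto. apply INRS_neq.
    - intros x _. apply contR_minus. apply contR_mult. apply contR_const. apply cont_pc. apply cont_Qf_sin. }
  rewrite RInt_minusR, RInt_scalR in E.
  - rewrite Qf_0 in E. unfold Cterm. fold m. rewrite pow_1. unfold Cint in *. 
    apply (Rmult_eq_reg_l m); auto. field_simplify; auto. 
    replace (RInt (fun t => (t - aa) ^ n * cos (m * t)) 0 aa) with
      (m * (Qf n aa * cos (m * aa) / m - 0 * cos (m * 0) / m + RInt (fun t => Qf n t * sin (m * t)) 0 aa)).
    field. auto. rewrite <- E. field. auto.
  - apply ex_pc.
  - apply (ex_RInt_scal (V := R_NormedModule)). apply ex_pc.
  - apply ex_RInt_cont. lra. intros; apply cont_Qf_sin.
Qed.

Lemma Sterm_split n j : Sterm n 1 j =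
  Qf n aa * (sin (INR (S j) * aa) / INR (S j) ^ 1) - RInt (fun t => Qf n t * cos (INR (S j) * t)) 0 aa.
Proof.
  set (m := INR (S j)). assert (Hm : m <> 0) by apply INRS_neq. assert (Ha := aa_pos).
  assert (E : RInt (fun t => / m * ((t - aa) ^ n * sin (m * t)) + Qf n t * cos (m * t)) 0 aa
     = Qf n aa * sin (m * aa) / m - Qf n 0 * sin (m * 0) / m).
  { rewrite (RInt_FTC (fun t => Qf n t * sin (m * t) / m)). auto. lra.
    - intros x _. unfold Qf. auto_derive. auto. fold_INR. unfold Rminus. rewrite <- ?tech_pow_Rmult.
      field. split; auto. apply INRS_neq.
    - intros x _. apply contR_plus. apply contR_mult. apply contR_const. apply cont_ps. apply cont_Qf_cos. }
  rewrite RInt_plusR, RInt_scalR in E.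
  - rewrite Qf_0 in E. unfold Sterm. fold m. rewrite pow_1. unfold Sint in *.
    apply (Rmult_eq_reg_l m); auto. field_simplify; auto.
    replace (RInt (fun t => (t - aa) ^ n * sin (m * t)) 0 aa) with
      (m * (Qf n aa * sin (m * aa) / m - 0 * sin (m * 0) / m - RInt (fun t => Qf n t * cos (m * t)) 0 aa)).
    field. auto. rewrite <- E. field. auto.
  - apply ex_ps.
  - apply (ex_RInt_scal (V := R_NormedModule)). apply ex_ps.
  - apply ex_RInt_cont. lra. intros; apply cont_Qf_cos.
Qed.

Lemma hx_cont' n x : 0 <= x <= aa -> continuous (hx n) x.
Proof. intros. apply hx_cont. generalize aa_lt1; lra. Qed.

Lemma ex_hx_cos n M phi : ex_RInt (fun t => hx n t * cos (M * t + phi)) 0 aa.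
Proof. apply ex_RInt_cont. generalize aa_pos; lra. intros; apply contR_mult. apply hx_cont'; auto. apply cont_affine_cos. Qed.

Lemma AL_Re n : is_series (Cterm n 1) (RInt (fun t => hx n t * cos (t / 2)) 0 aa).
Proof.
  assert (Ha := aa_pos). assert (Ha2 := aa_lt1). assert (Hpi := aa_lt_PI).
  assert (E : forall N, sum_n (Cterm n 1) N =
     Qf n aa * sum_n (fun j => cos (INR (S j) * aa) / INR (S j) ^ 1) N +
     (RInt (fun t => hx n t * cos (/ 2 * t + 0)) 0 aa -
      RInt (fun t => hx n t * cos ((INR (S N) + / 2) * t + 0)) 0 aa)).
  { intros N. match goal with |- ?a = ?b => change (@eq R a b) end.
    rewrite (sum_n_extR _ _ N (Cterm_split n)). rewrite sum_n_plusR, sum_n_multR.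
    f_equal. rewrite <- RInt_sum.
    2:{ intros j. apply ex_RInt_cont. lra. intros; apply cont_Qf_sin. }
    rewrite <- RInt_minusR by apply ex_hx_cos.
    apply RInt_extR. intros t Ht. rewrite Rmin_left, Rmax_right in Ht by lra.
    rewrite sum_n_multR. rewrite <- (hx_id n t) by lra.
    rewrite Rmult_assoc, sum_sin. rewrite !Rplus_0_r.
    replace (/ 2 * t) with (t / 2) by field. ring. }
  apply is_series_of_lim. apply (is_lim_seq_ext _ _ _ (fun N => eq_sym (E N))).
  replace (RInt (fun t => hx n t * cos (t / 2)) 0 aa) with
    (Qf n aa * 0 + (RInt (fun t => hx n t * cos (/ 2 * t + 0)) 0 aa - 0)).
  2:{ rewrite Rmult_0_r, Rplus_0_l, Rminus_0_r. apply RInt_extR. intros. f_equal. f_equal. field. }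
  apply lim_plusR. apply lim_scalR. apply lim_of_is_series. apply Cl1_series.
  apply lim_minusR. apply lim_constR. apply RL_shift. lra. intros; apply hx_cont'; lra.
Qed.

Lemma AL_Im n : is_series (Sterm n 1) (Qf n aa * aa + / 2 * RInt (Qf n) 0 aa).
Proof.
  assert (Ha := aa_pos). assert (Ha2 := aa_lt1). assert (Hpi := aa_lt_PI).
  assert (E : forall N, sum_n (Sterm n 1) N =
     Qf n aa * sum_n (fun j => sin (INR (S j) * aa) / INR (S j) ^ 1) N -
     (RInt (fun t => hx n t * cos ((INR (S N) + / 2) * t + - (PI / 2))) 0 aa - / 2 * RInt (Qf n) 0 aa)).
  { intros N. match goal with |- ?a = ?b => change (@eq R a b) end.
    rewrite (sum_n_extR _ _ N (Sterm_split n)).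
    unfold Rminus. rewrite sum_n_plusR, sum_n_multR, sum_n_oppR. f_equal. f_equal.
    rewrite <- RInt_sum.
    2:{ intros j. apply ex_RInt_cont. lra. intros; apply cont_Qf_cos. }
    rewrite <- RInt_scalR. 2:{ apply ex_RInt_cont. lra. intros; apply cont_Qf. }
    rewrite <- (RInt_opp (V := R_CompleteNormedModule)).
    2:{ apply (ex_RInt_scal (V := R_NormedModule)). apply ex_RInt_cont. lra. intros; apply cont_Qf. }
    rewrite <- RInt_plusR. 2: apply ex_hx_cos.
    2:{ apply (ex_RInt_opp (V := R_NormedModule)). apply (ex_RInt_scal (V := R_NormedModule)).
        apply ex_RInt_cont. lra. intros; apply cont_Qf. }
    apply RInt_extR. intros t Ht. rewrite Rmin_left, Rmax_right in Ht by lra.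
    rewrite sum_n_multR. rewrite <- (hx_id n t) by lra.
    rewrite Rmult_assoc, sum_cos. rewrite cos_shift_sin. replace (opp (/ 2 * (hx n t * (2 * sin (t / 2))))) with (- (/ 2 * (hx n t * (2 * sin (t / 2))))) by reflexivity. set (X := hx n t). set (Y := sin (t / 2)). set (Z := sin ((INR (S N) + / 2) * t)). unfold opp; simpl. field. }
  apply is_series_of_lim. apply (is_lim_seq_ext _ _ _ (fun N => eq_sym (E N))).
  replace (Qf n aa * aa + / 2 * RInt (Qf n) 0 aa) with
    (Qf n aa * aa - (0 - / 2 * RInt (Qf n) 0 aa)) by ring.
  apply lim_minusR. apply lim_scalR. apply lim_of_is_series. apply Gl1_series.
  apply lim_minusR. apply RL_shift. lra. intros; apply hx_cont'; lra. apply lim_constR.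
Qed.


Lemma ln_lt_self z : 0 < z -> ln z < z.
Proof.
  intros Hz. apply exp_lt_inv. rewrite exp_ln by auto.
  destruct (Req_dec z 0). lra. pose proof (exp_ineq1 z H). lra.
Qed.

Lemma ln2_lt1 : ln 2 < 1.
Proof. pose proof (ln_lt_self 2). replace 2 with (1 + 1) in * by ring.
  apply exp_lt_inv. rewrite exp_ln by lra. pose proof (exp_ineq1 1). lra. Qed.

Lemma two_sin_bounds x : 0 < x <= 1 -> x / 2 <= 2 * sin (x / 2) <= 1.
Proof.
  intros Hx. split.
  - pose proof (sin_bound (x / 2) 0 ltac:(lra) ltac:(generalize PI2_1; lra)) as [H _].
    unfold sin_approx, sin_term in H. simpl in H. 
    assert (x ^ 3 <= 1) by (replace 1 with (1 ^ 3) by ring; apply pow_incr; lra).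
    assert (x * x * x <= x) by nra. nra.
  - pose proof (sin_lt_x (x / 2) ltac:(lra)). lra.
Qed.

Lemma xA_bound x : 0 < x <= 1 -> Rabs (x * Afun x) <= 3 * sqrt x.
Proof.
  intros Hx. destruct (two_sin_bounds x Hx) as [H1 H2].
  unfold Afun. rewrite (Rabs_pos_eq (2 * _)) by lra.
  assert (L1 : ln (2 * sin (x / 2)) <= 0) by (rewrite <- ln_1; apply ln_le; lra).
  assert (L2 : ln (x / 2) <= ln (2 * sin (x / 2))) by (apply ln_le; lra).
  rewrite ln_div in L2 by lra.
  assert (Hs : 0 < sqrt x) by (apply sqrt_lt_R0; lra).
  assert (Hz := ln_lt_self (/ sqrt x) ltac:(apply Rinv_0_lt_compat; auto)).
  assert (Hxx : x = sqrt x * sqrt x) by (rewrite sqrt_sqrt; lra).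
  assert (Lsq : ln (sqrt x) = ln x / 2).
  { replace (ln x) with (ln (sqrt x * sqrt x)) by (rewrite <- Hxx; auto). rewrite ln_mult by auto. field. }
  rewrite ln_Rinv in Hz by auto. rewrite Lsq in Hz.
  assert (Hxs : x <= sqrt x) by (rewrite Hxx at 1; assert (sqrt x <= 1) by (rewrite <- sqrt_1; apply sqrt_le_1_alt; lra); nra).
  assert (Hm : x * (- ln x) <= 2 * sqrt x).
  { assert (- ln x < 2 / sqrt x) by (unfold Rdiv; lra).
    apply (Rle_trans _ (x * (2 / sqrt x))). apply Rmult_le_compat_l; lra.
    rewrite Hxx at 1. apply Req_le. field. lra. }
  rewrite Rabs_mult, Rabs_pos_eq by lra. rewrite Rabs_left1 by auto.
  pose proof ln2_lt1. pose proof (ln_lt_2).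
  apply (Rle_trans _ (x * (ln 2 - ln x))). apply Rmult_le_compat_l; lra. nra.
Qed.

Definition gg (n : nat) (t : R) : R := hx n t * cos (t / 2).
Definition Gf (n : nat) (x : R) : R := RInt (gg n) 0 x.
Definition Fh (n : nat) (t : R) : R := Qf n t * Afun t.
Definition Hf (n : nat) (t : R) : R := Fh n t - Gf n t.
Definition ff (n : nat) : R -> R := fun t => (t - aa) ^ n * Afun t.

Lemma gg_cont n x : 0 <= x < 2 -> continuous (gg n) x.
Proof. intros. unfold gg. apply contR_mult. apply hx_cont; auto. apply contR_der. auto_derive. auto. Qed.

Lemma ball_in02 (y : R) : 0 < y < 2 -> exists e : posreal, forall b, ball y e b -> 0 < b < 2.
Proof.
  intros Hy. assert (Hp : 0 < Rmin y (2 - y)) by (apply Rmin_pos; lra).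
  exists (mkposreal _ Hp). intros b Hb. apply ball_R in Hb. simpl in Hb.
  pose proof (Rmin_l y (2 - y)). pose proof (Rmin_r y (2 - y)).
  apply Rabs_lt_between in Hb. lra.
Qed.

Lemma Gf_derive n y : 0 < y < 2 -> is_derive (Gf n) y (gg n y).
Proof.
  intros Hy. apply (is_derive_RInt (V := R_NormedModule) (gg n) (Gf n) 0 y).
  - destruct (ball_in02 y Hy) as [e He]. exists e. intros b Hb. specialize (He b Hb).
    unfold Gf. apply (RInt_correct (V := R_CompleteNormedModule)). apply ex_RInt_cont. lra.
    intros; apply gg_cont; lra.
  - apply gg_cont; lra.
Qed.

Lemma two_sin_pos y : 0 < y < 2 -> 0 < 2 * sin (y / 2).
Proof. intros. assert (0 < sin (y / 2)) by (apply sin_gt_0; generalize PI2_1; lra). lra. Qed.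

Lemma Fh_derive n y : 0 < y < 2 ->
  is_derive (Fh n) y ((y - aa) ^ n * Afun y + Qf n y * (cos (y / 2) / (2 * sin (y / 2)))).
Proof.
  intros Hy. pose proof (two_sin_pos y Hy) as Hs. unfold Fh, Qf, Afun. unfold Rdiv in *. auto_derive.
  - split. lra. split. apply Rabs_pos_lt. lra. auto.
  - fold_INR. rewrite sign_eq_1 by lra. rewrite (Rabs_pos_eq (2 * sin (y * / 2))) by lra.
    unfold Rminus. rewrite <- ?tech_pow_Rmult. field. split. lra. apply INRS_neq.
Qed.

Lemma Hf_derive n y : 0 < y < 2 -> is_derive (Hf n) y (ff n y).
Proof.
  intros Hy. pose proof (two_sin_pos y Hy) as Hs.
  assert (H := is_derive_minus (K := R_AbsRing) (V := R_NormedModule) _ _ y _ _ (Fh_derive n y Hy) (Gf_derive n y Hy)).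
  unfold Hf. replace (ff n y) with (minus ((y - aa) ^ n * Afun y + Qf n y * (cos (y / 2) / (2 * sin (y / 2)))) (gg n y)).
  exact H.
  unfold minus, plus, opp; simpl. unfold ff, gg. rewrite <- (hx_id n y). field. lra.
  generalize PI2_1; lra.
Qed.

Lemma ff_cont n z : 0 < z < 2 -> continuous (ff n) z.
Proof.
  intros Hz. pose proof (two_sin_pos z Hz). apply contR_der. unfold ff, Afun. unfold Rdiv in *. auto_derive.
  split. lra. split. apply Rabs_pos_lt. lra. auto.
Qed.

Lemma DHf_cont n z : 0 < z < 2 -> continuous (Derive (Hf n)) z.
Proof.
  intros Hz. apply (continuous_ext_loc _ (ff n)). 2: apply ff_cont; auto.
  destruct (ball_in02 z Hz) as [e He]. exists e. intros b Hb. specialize (He b Hb).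
  symmetry. apply is_derive_unique. apply Hf_derive; auto.
Qed.

Lemma Afun_aa : Afun aa = 0.
Proof.
  unfold Afun, aa. replace (PI / 3 / 2) with (PI / 6) by field. rewrite sin_PI6.
  replace (2 * (1 / 2)) with 1 by field. rewrite Rabs_R1. apply ln_1.
Qed.

Lemma Hf_aa n : Hf n aa = - RInt (gg n) 0 aa.
Proof. unfold Hf, Fh, Gf. rewrite Afun_aa. ring. Qed.

Lemma fp_helper (P : R * R -> Prop) : (forall x, 0 < x < aa -> P (x, aa)) ->
  filter_prod (at_right 0) (at_point aa) P.
Proof.
  intros H. apply (Filter_prod _ _ _ (fun x => 0 < x < aa) (fun y => y = aa)).
  - exists (mkposreal _ aa_pos). intros y Hy Hpos. apply ball_R in Hy. simpl in Hy.
    rewrite Rminus_0_r in Hy. apply Rabs_lt_between in Hy. lra.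
  - reflexivity.
  - intros x y Hx Hy. subst y. auto.
Qed.

Lemma filterlim_at_point (f : R -> R) a : filterlim f (at_point a) (locally (f a)).
Proof. intros P HP. apply (locally_singleton _ _ HP). Qed.

Lemma ball_R' (c e y : R) : Rabs (y - c) < e -> ball c e y.
Proof. intros H. exact H. Qed.

Lemma bound_on (f : R -> R) lo hi : lo <= hi -> (forall x, lo <= x <= hi -> continuous f x) ->
  exists B, 0 <= B /\ forall x, lo <= x <= hi -> Rabs (f x) <= B.
Proof.
  intros Hl Hc. destruct (continuity_ab_maj (fun x => Rabs (f x)) lo hi Hl) as [xm [HB _]].
  { intros c Hc'. apply continuity_pt_filterlim. apply continuous_Rabs_comp. auto. }
  exists (Rabs (f xm)). split. apply Rabs_pos. auto.
Qed.

Lemma Hf_lim0 n : filterlim (Hf n) (at_right 0) (locally 0).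
Proof.
  assert (Ha := aa_pos). assert (Ha2 := aa_lt1).
  destruct (bound_on (Rf n) 0 aa) as [Bf [HBf0 HBf]]. lra. intros; apply Rf_cont.
  destruct (bound_on (gg n) 0 aa) as [Bg [HBg0 HBg]]. lra. intros; apply gg_cont; lra.
  intros P [eps Heps].
  set (c := eps / (3 * Bf + Bg + 1)).
  assert (Hc : 0 < c) by (unfold c; apply Rdiv_lt_0_compat; [apply cond_pos|lra]).
  assert (Hd : 0 < Rmin (Rmin 1 aa) (c * c)) by (repeat apply Rmin_pos; nra).
  exists (mkposreal _ Hd). intros x Hx Hpos. apply ball_R in Hx. simpl in Hx.
  rewrite Rminus_0_r, Rabs_pos_eq in Hx by lra.
  assert (Hx1 : x <= 1) by (pose proof (Rmin_l (Rmin 1 aa) (c * c)); pose proof (Rmin_l 1 aa); lra).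
  assert (Hxa : x <= aa) by (pose proof (Rmin_l (Rmin 1 aa) (c * c)); pose proof (Rmin_r 1 aa); lra).
  assert (Hxc : x < c * c) by (pose proof (Rmin_r (Rmin 1 aa) (c * c)); lra).
  apply Heps. apply ball_R'. rewrite Rminus_0_r.
  assert (Hs : sqrt x < c).
  { rewrite <- (sqrt_square c) by lra. apply sqrt_lt_1; nra. }
  assert (Hs0 : 0 < sqrt x) by (apply sqrt_lt_R0; lra).
  assert (Hxs : x <= sqrt x).
  { assert (x = sqrt x * sqrt x) by (rewrite sqrt_sqrt; lra).
    assert (sqrt x <= 1) by (rewrite <- sqrt_1; apply sqrt_le_1_alt; lra). nra. }
  assert (B1 : Rabs (Fh n x) <= Bf * (3 * sqrt x)).
  { unfold Fh. rewrite Qf_Rf. replace (x * Rf n x * Afun x) with (Rf n x * (x * Afun x)) by ring.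
    rewrite Rabs_mult. apply Rmult_le_compat; try apply Rabs_pos. apply HBf; lra. apply xA_bound; lra. }
  assert (B2 : Rabs (Gf n x) <= (x - 0) * Bg).
  { unfold Gf. apply RInt_bound. lra. apply ex_RInt_cont. lra. intros; apply gg_cont; lra.
    intros; apply HBg; lra. }
  unfold Hf. eapply Rle_lt_trans. apply Rabs_triang. rewrite Rabs_Ropp.
  apply (Rle_lt_trans _ ((3 * Bf + Bg) * sqrt x)).
  { assert ((x - 0) * Bg <= sqrt x * Bg) by (apply Rmult_le_compat_r; lra). nra. }
  apply (Rle_lt_trans _ ((3 * Bf + Bg) * c)). apply Rmult_le_compat_l; lra.
  unfold c. apply (Rmult_lt_reg_r (3 * Bf + Bg + 1)). lra.
  field_simplify; try lra. pose proof (cond_pos eps). nra.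
Qed.

Lemma SLs_val n : SLs1 (n + 2) = - RInt (gg n) 0 aa.
Proof.
  assert (Ha := aa_pos). assert (Ha2 := aa_lt1).
  unfold SLs1. replace (n + 2 - 2)%nat with n by lia. change (PI / 3) with aa.
  apply is_RInt_gen_unique.
  apply (is_RInt_gen_ext (Derive (Hf n))).
  - apply fp_helper. intros x Hx z Hz. simpl in Hz. rewrite Rmin_left, Rmax_right in Hz by lra.
    apply is_derive_unique. apply Hf_derive. lra.
  - replace (- RInt (gg n) 0 aa) with (Hf n aa - 0) by (rewrite Hf_aa; ring).
    apply is_RInt_gen_Derive.
    + apply fp_helper. intros x Hx z Hz. simpl in Hz. rewrite Rmin_left, Rmax_right in Hz by lra.
      eexists. apply Hf_derive. lra.
    + apply fp_helper. intros x Hx z Hz. simpl in Hz. rewrite Rmin_left, Rmax_right in Hz by lra.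
      apply DHf_cont. lra.
    + apply Hf_lim0.
    + apply filterlim_at_point.
Qed.


Lemma HRe n : SpanRe (n + 2) (Series (Cterm n 1)).
Proof.
  rewrite (is_series_unique _ _ (AL_Re n)).
  replace (RInt (fun t => hx n t * cos (t / 2)) 0 aa) with (- SLs1 (n + 2)).
  apply SpanRe_opp, SpanRe_SLs1. lia.
  rewrite SLs_val. unfold gg. ring.
Qed.

Lemma RInt_Qf n : RInt (Qf n) 0 aa =
  ((aa - aa) ^ (S (S n)) / INR (S (S n)) - (- aa) ^ (S n) * aa) / INR (S n)
  - ((0 - aa) ^ (S (S n)) / INR (S (S n)) - (- aa) ^ (S n) * 0) / INR (S n).
Proof.
  assert (Ha := aa_pos).
  rewrite (RInt_FTC (fun t => ((t - aa) ^ (S (S n)) / INR (S (S n)) - (- aa) ^ (S n) * t) / INR (S n))).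
  - auto.
  - lra.
  - intros x _. unfold Qf. auto_derive. auto. fold_INR. unfold Rminus. rewrite <- ?tech_pow_Rmult.
    field. rewrite <- S_INR. split; apply INRS_neq.
  - intros; apply cont_Qf.
Qed.

Lemma HIm n : SpanIm (n + 2) (Series (Sterm n 1)).
Proof.
  rewrite (is_series_unique _ _ (AL_Im n)). rewrite RInt_Qf.
  set (r := / INR (S n) + / 2 * (/ INR (S n) - / (INR (S (S n)) * INR (S n)))).
  replace (Qf n aa * aa + / 2 * (((aa - aa) ^ (S (S n)) / INR (S (S n)) - (- aa) ^ (S n) * aa) / INR (S n)
     - ((0 - aa) ^ (S (S n)) / INR (S (S n)) - (- aa) ^ (S n) * 0) / INR (S n)))
    with ((- aa) ^ (n + 2) * r).
  - apply (cls_mul_aa false (n + 2) (n + 2) 0). lia. simpl. exists r. split.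
    + assert (H2 : isQ 2) by (replace 2 with (INR 2) by (simpl; ring); apply isQ_INR).
      unfold r. apply isQ_plus. apply isQ_inv, isQ_INR. apply isQ_mult. apply isQ_inv, H2.
      apply isQ_minus. apply isQ_inv, isQ_INR. apply isQ_inv, isQ_mult; apply isQ_INR.
    + simpl. ring.
  - unfold r, Qf. rewrite Rminus_diag, !pow_i by lia. replace (0 - aa) with (- aa) by ring.
    replace (n + 2)%nat with (S (S n)) by lia. rewrite <- ?tech_pow_Rmult.
    field. split; apply INRS_neq.
Qed.

Lemma SpanIm_Q k x : SpanIm k x -> exists q : Q, x = Q2R q * PI ^ k.
Proof. intros [r [[q ->] ->]]. exists q. auto. Qed.

Theorem theorem6 (k : nat) (hk : (1 <= k)%nat) :
  (exists c : nat -> Q,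
      Cl k (PI / 3) =
      sum_n_m (fun k1 : nat => Q2R (c k1) * PI ^ (k - k1) * SLs1 k1) 2 k)
  /\ (exists q : Q, Gl k (PI / 3) = Q2R q * PI ^ k).
Proof.
  change (PI / 3) with aa.
  destruct (Nat.eq_dec k 1) as [->|Hk1].
  - split.
    + exists (fun _ => 0%Q). unfold Cl. simpl Nat.even. cbv iota. rewrite Cl1.
      rewrite sum_n_m_zero by lia. reflexivity.
    + exists (1 # 3)%Q. unfold Gl. simpl Nat.even. cbv iota. unfold ImLi.
      rewrite (is_series_unique _ _ Gl1_series). unfold Q2R. simpl. unfold aa. field.
  - destruct (Good_all HRe HIm k ltac:(lia)) as [_ [H1 H2]]. split. exact H1. apply SpanIm_Q; auto.
Qed.
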